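(* Let $\alpha>0$ and $p>1$ be constants. For $\xi>0$, let $z$ be the solution of \[ z''+|x|^{\alpha}z^p=0,\qquad z(\xi)=1,\quad z'(\xi)=0. \] Let $a(\xi)$ denote the first root of $z$ greater than $\xi$, and $b(\xi)$ the first root of $z$ to the left of $\xi$. Assume that the equation $a(\xi)=-b(\xi)$ has a unique solution $\xi_0>0$. Then for any $\lambda>0$ the problem \[ u''+\lambda|x|^{\alpha}u^p=0\quad(-1<x<1),\qquad u(-1)=u(1)=0, \] has exactly three positive solutions: \begin{itemize} \item $u_1(x)$, which is an even function; \item $u_2(x)$, which has its point of maximum at $\xi=\xi_0/a(\xi_0)$; \item $u_3(x)=u_2(-x)$. \end{itemize} Moreover, if $m$ denotes the maximum value of $u_2$ (that is, $m=u_2(\xi)$), then $\lambda=a(\xi_0)^{\alpha+2}/m^{p-1}$. *)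

(* Defs.v *)
From Stdlib Require Import Reals Lra.
From Coquelicot Require Import Coquelicot.
Open Scope R_scope.

(* Real power x^y for x >= 0, with the convention 0^y = 0 (y > 0 throughout).
   Only used for |x|^alpha and for z^p, u^p with z, u > 0. *)
Definition pw (x y : R) : R := if Rle_dec x 0 then 0 else Rpower x y.

(* [ivp_roots alpha p xi b a]: the solution z of
     z'' + |x|^alpha z^p = 0,  z(xi) = 1, z'(xi) = 0
   is positive on (b, a) with b < xi < a and vanishes at b and a, i.e.
   a = a(xi) is the first root of z to the right of xi and
   b = b(xi) the first root of z to the left of xi. *)
Definition ivp_roots (alpha p xi b a : R) : Prop :=
  b < xi < a /\
  exists z z' : R -> R,
    (forall x, b < x < a ->
       is_derive z x (z' x) /\
       is_derive z' x (- (pw (Rabs x) alpha * pw (z x) p))) /\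
    (forall x, b < x < a -> 0 < z x) /\
    z xi = 1 /\ z' xi = 0 /\
    z b = 0 /\ z a = 0 /\
    filterlim z (at_right b) (locally 0) /\
    filterlim z (at_left a) (locally 0).

Definition pos_sol (alpha p lambda : R) (u : R -> R) : Prop :=
  exists u' : R -> R,
    (forall x, -1 < x < 1 ->
       is_derive u x (u' x) /\
       is_derive u' x (- (lambda * pw (Rabs x) alpha * pw (u x) p))) /\
    (forall x, -1 < x < 1 -> 0 < u x) /\
    u (-1) = 0 /\ u 1 = 0 /\
    filterlim u (at_right (-1)) (locally 0) /\
    filterlim u (at_left 1) (locally 0).

(* Main.v *)
Require Import Defs.
From Stdlib Require Import Reals Lra Lia Classical.
From Coquelicot Require Import Coquelicot.
Open Scope R_scope.

Lemma Rpower_pos x y : 0 < Rpower x y.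
Proof. unfold Rpower; apply exp_pos. Qed.

Lemma Rpower_1_base y : Rpower 1 y = 1.
Proof. unfold Rpower. rewrite ln_1, Rmult_0_r, exp_0. reflexivity. Qed.

Lemma pw_pos x y : 0 < x -> pw x y = Rpower x y.
Proof. intros H; unfold pw; destruct (Rle_dec x 0); [lra|auto]. Qed.

Lemma pw_nonpos x y : x <= 0 -> pw x y = 0.
Proof. intros H; unfold pw; destruct (Rle_dec x 0); [auto|lra]. Qed.

Lemma pw_ge0 x y : 0 <= pw x y.
Proof. unfold pw; destruct (Rle_dec x 0); [lra|]. left; apply Rpower_pos. Qed.

Lemma pw_gt0 x y : 0 < x -> 0 < pw x y.
Proof. intros H; rewrite pw_pos; auto; apply Rpower_pos. Qed.

Lemma pw_scale k x y : 0 < k -> pw (k * x) y = Rpower k y * pw x y.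
Proof.
  intros Hk. destruct (Rle_dec x 0) as [Hx|Hx].
  - rewrite (pw_nonpos x) by lra. rewrite pw_nonpos by nra. ring.
  - rewrite (pw_pos x) by lra. rewrite pw_pos by nra.
    rewrite Rpower_mult_distr; auto; lra.
Qed.

Lemma pw_abs_scale c x a : 0 < c -> pw (Rabs (c * x)) a = Rpower c a * pw (Rabs x) a.
Proof.
  intros Hc. rewrite Rabs_mult, (Rabs_pos_eq c) by lra. apply pw_scale; auto.
Qed.

Lemma pw_mono x1 x2 a : 0 <= a -> x1 <= x2 -> pw x1 a <= pw x2 a.
Proof.
  intros Ha H. destruct (Rle_dec x1 0) as [H1|H1].
  - rewrite (pw_nonpos x1) by auto. apply pw_ge0.
  - rewrite !pw_pos by lra. apply Rle_Rpower_l; lra.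
Qed.

Lemma Rpower_le1 x a : 0 <= a -> 0 < x <= 1 -> Rpower x a <= 1.
Proof.
  intros Ha Hx. rewrite <- (Rpower_1_base a). apply Rle_Rpower_l; lra.
Qed.

Lemma pw_le_self x p : 1 <= p -> 0 < x <= 1 -> pw x p <= x.
Proof.
  intros Hp Hx. rewrite pw_pos by lra.
  replace p with (1 + (p - 1)) by ring. rewrite Rpower_plus, Rpower_1 by lra.
  assert (Rpower x (p-1) <= 1) by (apply Rpower_le1; lra).
  assert (0 < Rpower x (p-1)) by apply Rpower_pos. nra.
Qed.

Lemma pw_le1 x p : 0 <= p -> x <= 1 -> pw x p <= 1.
Proof.
  intros Hp Hx. destruct (Rle_dec x 0).
  - rewrite pw_nonpos; auto; lra.
  - rewrite pw_pos by lra. apply Rpower_le1; lra.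
Qed.

Lemma is_derive_Rpower x p : 0 < x -> is_derive (fun t => Rpower t p) x (p * Rpower x (p - 1)).
Proof. intros H. apply is_derive_Reals. apply derivable_pt_lim_power; auto. Qed.

Lemma cont_of_derive (f : R -> R) x l : is_derive f x l -> continuous f x.
Proof. intros H. apply (@ex_derive_continuous R_AbsRing R_NormedModule). exists l; auto. Qed.

Lemma contpt_of_derive (f : R -> R) x l : is_derive f x l -> continuity_pt f x.
Proof. intros H. apply continuity_pt_filterlim. apply (cont_of_derive f x l H). Qed.

Lemma pw_lip_aux p x y : 1 <= p -> y <= x -> x <= 1 ->
  Rabs (pw x p - pw y p) <= p * Rabs (x - y).
Proof.
  intros Hp Hyx Hx1.
  rewrite (Rabs_pos_eq (x - y)) by lra.
  destruct (Rle_dec x 0) as [Hx|Hx].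
  - rewrite !pw_nonpos by lra. rewrite Rminus_0_r, Rabs_R0. nra.
  - destruct (Rle_dec y 0) as [Hy|Hy].
    + rewrite (pw_nonpos y) by lra. rewrite Rminus_0_r.
      rewrite Rabs_pos_eq by apply pw_ge0.
      assert (pw x p <= x) by (apply pw_le_self; lra). nra.
    + rewrite !pw_pos by lra.
      destruct (MVT_gen (fun t => Rpower t p) y x (fun t => p * Rpower t (p - 1))) as [c [Hc Heq]].
      * intros t Ht. rewrite Rmin_left, Rmax_right in Ht by lra.
        apply is_derive_Rpower. lra.
      * intros t Ht. rewrite Rmin_left, Rmax_right in Ht by lra.
        eapply contpt_of_derive. apply is_derive_Rpower. lra.
      * rewrite Rmin_left, Rmax_right in Hc by lra.
        rewrite Heq. rewrite Rabs_mult.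
        rewrite (Rabs_pos_eq (x - y)) by lra.
        assert (Rpower c (p-1) <= 1) by (apply Rpower_le1; lra).
        assert (0 < Rpower c (p-1)) by apply Rpower_pos.
        rewrite Rabs_mult, (Rabs_pos_eq p) by lra.
        rewrite (Rabs_pos_eq (Rpower c (p - 1))) by lra.
        assert (0 <= p * (x - y)) by nra. nra.
Qed.

Lemma pw_lip p x y : 1 <= p -> x <= 1 -> y <= 1 ->
  Rabs (pw x p - pw y p) <= p * Rabs (x - y).
Proof.
  intros Hp Hx Hy. destruct (Rle_dec y x).
  - apply pw_lip_aux; auto.
  - rewrite Rabs_minus_sym, (Rabs_minus_sym x). apply pw_lip_aux; auto; lra.
Qed.

Lemma pw_continuous p z : 0 < p -> continuous (fun t => pw t p) z.
Proof.
  intros Hp. destruct (Rlt_dec 0 z) as [Hz|Hz].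
  - apply continuous_ext_loc with (fun t => Rpower t p).
    + assert (Hpos : 0 < z / 2) by lra.
      exists (mkposreal _ Hpos). intros t Ht. simpl in Ht.
      unfold ball in Ht; simpl in Ht; unfold AbsRing_ball, abs, minus, plus, opp in Ht; simpl in Ht.
      rewrite pw_pos; auto. apply Rabs_def2 in Ht. lra.
    + eapply cont_of_derive. apply is_derive_Rpower; auto.
  - apply continuity_pt_filterlim.
    intros eps Heps. exists (Rpower eps (/ p)). split. apply Rpower_pos.
    intros t [_ Ht]. unfold R_dist in *. simpl in Ht. unfold R_dist in Ht.
    rewrite (pw_nonpos z) by lra.
    apply Rabs_def2 in Ht.
    simpl; unfold R_dist. rewrite Rminus_0_r.
    destruct (Rle_dec t 0).
    + rewrite pw_nonpos by auto. rewrite Rabs_R0. lra.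
    + rewrite Rabs_pos_eq by apply pw_ge0. rewrite pw_pos by lra.
      replace eps with (Rpower (Rpower eps (/ p)) p).
      * apply Rlt_Rpower_l; lra.
      * rewrite Rpower_mult. replace (/ p * p) with 1 by (field; lra).
        apply Rpower_1; auto.
Qed.

Lemma h_continuous alpha x : 0 < alpha -> continuous (fun t => pw (Rabs t) alpha) x.
Proof.
  intros Ha. apply continuous_comp with (f := Rabs) (g := fun t => pw t alpha).
  apply continuous_Rabs. apply pw_continuous; auto.
Qed.
Lemma mvt_open (f df : R -> R) l r a b :
  (forall x, l < x < r -> is_derive f x (df x)) -> l < a -> a <= b -> b < r ->
  exists c, a <= c <= b /\ f b - f a = df c * (b - a).
Proof.
  intros Hd Ha Hab Hb.
  destruct (MVT_gen f a b df) as [c [Hc Heq]].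
  - intros t Ht. rewrite Rmin_left, Rmax_right in Ht by lra. apply Hd; lra.
  - intros t Ht. rewrite Rmin_left, Rmax_right in Ht by lra.
    eapply contpt_of_derive. apply Hd. lra.
  - rewrite Rmin_left, Rmax_right in Hc by lra. exists c; split; auto.
Qed.

Lemma nonincr_of_deriv (f df : R -> R) l r a b :
  (forall x, l < x < r -> is_derive f x (df x)) -> (forall x, a <= x <= b -> df x <= 0) ->
  l < a -> a <= b -> b < r -> f b <= f a.
Proof.
  intros Hd Hn Ha Hab Hb. destruct (mvt_open f df l r a b) as [c [Hc Heq]]; auto.
  assert (df c <= 0) by (apply Hn; lra). nra.
Qed.

Lemma nondecr_of_deriv (f df : R -> R) l r a b :
  (forall x, l < x < r -> is_derive f x (df x)) -> (forall x, a <= x <= b -> 0 <= df x) ->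
  l < a -> a <= b -> b < r -> f a <= f b.
Proof.
  intros Hd Hn Ha Hab Hb. destruct (mvt_open f df l r a b) as [c [Hc Heq]]; auto.
  assert (0 <= df c) by (apply Hn; lra). nra.
Qed.

Lemma is_derive_val (f : R -> R) (x a b : R) : is_derive f x a -> a = b -> is_derive f x b.
Proof. intros H ->; auto. Qed.

Lemma is_derive_mulR (f g : R -> R) x a b :
  is_derive f x a -> is_derive g x b -> is_derive (fun t => f t * g t) x (a * g x + f x * b).
Proof.
  intros Hf Hg. apply is_derive_Reals in Hf. apply is_derive_Reals in Hg.
  apply is_derive_Reals. apply (derivable_pt_lim_mult f g x a b Hf Hg).
Qed.

Lemma is_derive_plusR (f g : R -> R) x a b :
  is_derive f x a -> is_derive g x b -> is_derive (fun t => f t + g t) x (a + b).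
Proof.
  intros Hf Hg. apply is_derive_Reals in Hf. apply is_derive_Reals in Hg.
  apply is_derive_Reals. apply (derivable_pt_lim_plus f g x a b Hf Hg).
Qed.

Lemma is_derive_minusR (f g : R -> R) x a b :
  is_derive f x a -> is_derive g x b -> is_derive (fun t => f t - g t) x (a - b).
Proof.
  intros Hf Hg. apply is_derive_Reals in Hf. apply is_derive_Reals in Hg.
  apply is_derive_Reals. apply (derivable_pt_lim_minus f g x a b Hf Hg).
Qed.

Lemma is_derive_constR (c x : R) : is_derive (fun _ => c) x 0.
Proof. apply is_derive_Reals. apply derivable_pt_lim_const. Qed.

Lemma is_derive_idR (x : R) : is_derive (fun t => t) x 1.
Proof. apply is_derive_Reals. apply derivable_pt_lim_id. Qed.

Lemma is_derive_scalR (c : R) (f : R -> R) x a :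
  is_derive f x a -> is_derive (fun t => c * f t) x (c * a).
Proof.
  intros H. replace (c * a) with (0 * f x + c * a) by ring.
  apply (is_derive_mulR (fun _ => c) f). apply is_derive_constR. auto.
Qed.

Lemma is_derive_compR (f g : R -> R) x a b :
  is_derive g x b -> is_derive f (g x) a -> is_derive (fun t => f (g t)) x (a * b).
Proof.
  intros Hg Hf. apply is_derive_Reals in Hf. apply is_derive_Reals in Hg.
  apply is_derive_Reals. exact (derivable_pt_lim_comp g f x b a Hg Hf).
Qed.

Lemma is_derive_expc (c x : R) : is_derive (fun t => exp (c * t)) x (c * exp (c * x)).
Proof.
  replace (c * exp (c * x)) with (exp (c * x) * (c * 1)) by ring.
  apply (is_derive_compR exp (fun t => c * t)).
  apply is_derive_scalR, is_derive_idR.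
  apply is_derive_Reals, derivable_pt_lim_exp.
Qed.

Lemma uniq_core l r x0 K (y1 w1 F1 y2 w2 F2 : R -> R) :
  0 <= K -> l < x0 < r ->
  (forall x, l < x < r -> is_derive y1 x (w1 x) /\ is_derive w1 x (F1 x)) ->
  (forall x, l < x < r -> is_derive y2 x (w2 x) /\ is_derive w2 x (F2 x)) ->
  (forall x, l < x < r -> Rabs (F1 x - F2 x) <= K * Rabs (y1 x - y2 x)) ->
  y1 x0 = y2 x0 -> w1 x0 = w2 x0 ->
  forall x, l < x < r -> y1 x = y2 x.
Proof.
  intros HK Hx0 H1 H2 HL E0 W0.
  set (C := 1 + K).
  set (E := fun t => (y1 t - y2 t) * (y1 t - y2 t) + (w1 t - w2 t) * (w1 t - w2 t)).
  set (dE := fun t => 2 * (y1 t - y2 t) * (w1 t - w2 t) + 2 * (w1 t - w2 t) * (F1 t - F2 t)).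
  assert (HdE : forall t, l < t < r -> is_derive E t (dE t)).
  { intros t Ht. destruct (H1 t Ht) as [Ha Hb]. destruct (H2 t Ht) as [Hc Hd].
    unfold E, dE.
    assert (Hy := is_derive_minusR _ _ t _ _ Ha Hc).
    assert (Hw := is_derive_minusR _ _ t _ _ Hb Hd).
    assert (Q1 := is_derive_mulR _ _ t _ _ Hy Hy).
    assert (Q2 := is_derive_mulR _ _ t _ _ Hw Hw).
    assert (Q := is_derive_plusR _ _ t _ _ Q1 Q2).
    eapply is_derive_val; [exact Q|]. cbv beta. ring. }
  assert (HE0 : forall t, 0 <= E t).
  { intros t; unfold E. pose proof (Rle_0_sqr (y1 t - y2 t)); pose proof (Rle_0_sqr (w1 t - w2 t)); unfold Rsqr in *; lra. }
  assert (HdEb : forall t, l < t < r -> Rabs (dE t) <= C * E t).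
  { intros t Ht. specialize (HL t Ht). unfold dE, E, C.
    set (d := y1 t - y2 t) in *. set (e := w1 t - w2 t). set (q := F1 t - F2 t) in *.
    assert (Hq : Rabs (2 * d * e + 2 * e * q) <= 2 * Rabs d * Rabs e + 2 * Rabs e * Rabs q).
    { eapply Rle_trans. apply Rabs_triang. rewrite !Rabs_mult, Rabs_pos_eq by lra. lra. }
    assert (Hde : 2 * Rabs d * Rabs e <= d * d + e * e).
    { assert (0 <= (Rabs d - Rabs e) ^ 2) by apply pow2_ge_0.
      assert (d * d = Rabs d * Rabs d) by (rewrite <- Rabs_mult; rewrite Rabs_pos_eq; nra).
      assert (e * e = Rabs e * Rabs e) by (rewrite <- Rabs_mult; rewrite Rabs_pos_eq; nra).
      nra. }
    assert (0 <= Rabs e) by apply Rabs_pos.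
    assert (Hq2 : 2 * Rabs e * Rabs q <= K * (2 * Rabs d * Rabs e)) by nra.
    nra. }
  assert (Ex0 : E x0 = 0). { unfold E; rewrite E0, W0; ring. }
  intros x Hx.
  assert (Ex : E x = 0).
  { destruct (Rle_dec x0 x) as [Hle|Hle].
    - set (G := fun t => E t * exp ((- C) * t)).
      assert (HG : forall t, l < t < r -> is_derive G t (dE t * exp ((-C) * t) + E t * ((- C) * exp ((-C) * t)))).
      { intros t Ht. apply (is_derive_mulR E (fun s => exp ((-C) * s))). auto. apply is_derive_expc. }
      assert (HGn : forall t, l < t < r -> dE t * exp ((-C) * t) + E t * ((- C) * exp ((-C) * t)) <= 0).
      { intros t Ht. assert (Hb := HdEb t Ht). pose proof (Rle_abs (dE t)). pose proof (Rle_abs (- dE t)). rewrite Rabs_Ropp in *.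
        assert (0 < exp ((-C) * t)) by apply exp_pos. nra. }
      assert (Hm := nonincr_of_deriv G _ l r x0 x HG (fun t Ht => HGn t ltac:(lra)) ltac:(lra) Hle ltac:(lra)).
      unfold G in Hm. rewrite Ex0, Rmult_0_l in Hm.
      assert (0 < exp ((-C) * x)) by apply exp_pos.
      specialize (HE0 x). nra.
    - set (G := fun t => E t * exp (C * t)).
      assert (HG : forall t, l < t < r -> is_derive G t (dE t * exp (C * t) + E t * (C * exp (C * t)))).
      { intros t Ht. apply (is_derive_mulR E (fun s => exp (C * s))). auto. apply is_derive_expc. }
      assert (HGn : forall t, l < t < r -> 0 <= dE t * exp (C * t) + E t * (C * exp (C * t))).
      { intros t Ht. assert (Hb := HdEb t Ht). pose proof (Rle_abs (dE t)). pose proof (Rle_abs (- dE t)). rewrite Rabs_Ropp in *.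
        assert (0 < exp (C * t)) by apply exp_pos. nra. }
      assert (Hm := nondecr_of_deriv G _ l r x x0 HG (fun t Ht => HGn t ltac:(lra)) ltac:(lra) ltac:(lra) ltac:(lra)).
      unfold G in Hm. rewrite Ex0, Rmult_0_l in Hm.
      assert (0 < exp (C * x)) by apply exp_pos.
      specialize (HE0 x). nra. }
  unfold E in Ex. pose proof (Rle_0_sqr (w1 x - w2 x)). pose proof (Rle_0_sqr (y1 x - y2 x)).
  unfold Rsqr in *.
  assert (Hz : (y1 x - y2 x) * (y1 x - y2 x) = 0) by lra.
  apply Rmult_integral in Hz. lra.
Qed.
Lemma ballR (x y e : R) : ball x e y <-> Rabs (y - x) < e.
Proof. unfold ball; simpl; unfold AbsRing_ball, abs, minus, plus, opp; simpl. tauto. Qed.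

Lemma at_left_iff (f : R -> R) a L :
  filterlim f (at_left a) (locally L) <->
  (forall eps, 0 < eps -> exists d, 0 < d /\ forall x, a - d < x < a -> Rabs (f x - L) < eps).
Proof.
  rewrite filterlim_locally. split.
  - intros H eps He. destruct (H (mkposreal eps He)) as [d Hd].
    exists d. split. apply cond_pos. intros x Hx. apply ballR. apply Hd.
    apply ballR. rewrite Rabs_left by lra. lra. lra.
  - intros H eps. destruct (H eps (cond_pos eps)) as [d [Hd H']].
    exists (mkposreal d Hd). intros y Hy Hya. apply ballR. apply H'.
    assert (Hy2 : Rabs (y - a) < d) by (apply ballR; exact Hy). cbv beta in Hya. apply Rabs_def2 in Hy2. lra.
Qed.

Lemma at_right_iff (f : R -> R) a L :
  filterlim f (at_right a) (locally L) <->
  (forall eps, 0 < eps -> exists d, 0 < d /\ forall x, a < x < a + d -> Rabs (f x - L) < eps).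
Proof.
  rewrite filterlim_locally. split.
  - intros H eps He. destruct (H (mkposreal eps He)) as [d Hd].
    exists d. split. apply cond_pos. intros x Hx. apply ballR. apply Hd.
    apply ballR. rewrite Rabs_right by lra. lra. lra.
  - intros H eps. destruct (H eps (cond_pos eps)) as [d [Hd H']].
    exists (mkposreal d Hd). intros y Hy Hya. apply ballR. apply H'.
    assert (Hy2 : Rabs (y - a) < d) by (apply ballR; exact Hy). cbv beta in Hya. apply Rabs_def2 in Hy2. lra.
Qed.

Lemma cont_iff (f : R -> R) x :
  continuous f x <-> (forall eps, 0 < eps -> exists d, 0 < d /\ forall y, Rabs (y - x) < d -> Rabs (f y - f x) < eps).
Proof.
  split.
  - intros H eps He. apply continuity_pt_filterlim in H.
    destruct (H eps He) as [d [Hd H']]. exists d. split; auto.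
    intros y Hy. destruct (Req_dec y x) as [->|Hne].
    + rewrite Rminus_diag, Rabs_R0. auto.
    + apply H'. split. split; auto. exact I. exact Hy.
  - intros H. apply continuity_pt_filterlim. intros eps He.
    destruct (H eps He) as [d [Hd H']]. exists d. split; auto.
    intros y [_ Hy]. apply H'. exact Hy.
Qed.

Lemma lim_left_cont (f : R -> R) a :
  filterlim f (at_left a) (locally 0) -> continuous f a -> f a = 0.
Proof.
  intros Hl Hc. rewrite at_left_iff in Hl. rewrite cont_iff in Hc.
  destruct (Req_dec (f a) 0) as [|Hne]; auto. exfalso.
  assert (He : 0 < Rabs (f a) / 2) by (apply Rabs_pos_lt in Hne; lra).
  destruct (Hl _ He) as [d1 [Hd1 H1]]. destruct (Hc _ He) as [d2 [Hd2 H2]].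
  set (x := a - Rmin d1 d2 / 2).
  assert (Hm : 0 < Rmin d1 d2) by (apply Rmin_pos; auto).
  assert (Rmin d1 d2 <= d1) by apply Rmin_l. assert (Rmin d1 d2 <= d2) by apply Rmin_r.
  specialize (H1 x ltac:(unfold x; lra)). specialize (H2 x).
  assert (Hx : Rabs (x - a) < d2) by (unfold x; rewrite Rabs_left by lra; lra).
  specialize (H2 Hx). rewrite Rminus_0_r in H1.
  pose proof (Rabs_triang_inv (f a) (f x)). rewrite Rabs_minus_sym in H2. lra.
Qed.

Lemma lim_right_cont (f : R -> R) a :
  filterlim f (at_right a) (locally 0) -> continuous f a -> f a = 0.
Proof.
  intros Hl Hc. rewrite at_right_iff in Hl. rewrite cont_iff in Hc.
  destruct (Req_dec (f a) 0) as [|Hne]; auto. exfalso.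
  assert (He : 0 < Rabs (f a) / 2) by (apply Rabs_pos_lt in Hne; lra).
  destruct (Hl _ He) as [d1 [Hd1 H1]]. destruct (Hc _ He) as [d2 [Hd2 H2]].
  set (x := a + Rmin d1 d2 / 2).
  assert (Hm : 0 < Rmin d1 d2) by (apply Rmin_pos; auto).
  assert (Rmin d1 d2 <= d1) by apply Rmin_l. assert (Rmin d1 d2 <= d2) by apply Rmin_r.
  specialize (H1 x ltac:(unfold x; lra)). specialize (H2 x).
  assert (Hx : Rabs (x - a) < d2) by (unfold x; rewrite Rabs_right by lra; lra).
  specialize (H2 Hx). rewrite Rminus_0_r in H1.
  pose proof (Rabs_triang_inv (f a) (f x)). rewrite Rabs_minus_sym in H2. lra.
Qed.

Lemma lim_left_of_cont (f : R -> R) a : continuous f a -> f a = 0 -> filterlim f (at_left a) (locally 0).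
Proof.
  intros Hc H0. rewrite cont_iff in Hc. apply at_left_iff. intros eps He.
  destruct (Hc eps He) as [d [Hd H]]. exists d; split; auto. intros x Hx.
  rewrite <- H0. apply H. rewrite Rabs_left by lra. lra.
Qed.

Lemma lim_right_of_cont (f : R -> R) a : continuous f a -> f a = 0 -> filterlim f (at_right a) (locally 0).
Proof.
  intros Hc H0. rewrite cont_iff in Hc. apply at_right_iff. intros eps He.
  destruct (Hc eps He) as [d [Hd H]]. exists d; split; auto. intros x Hx.
  rewrite <- H0. apply H. rewrite Rabs_right by lra. lra.
Qed.
Definition sol (alpha p mu : R) (y y' : R -> R) (l r : R) : Prop :=
  forall x, l < x < r -> is_derive y x (y' x) /\
    is_derive y' x (- (mu * pw (Rabs x) alpha * pw (y x) p)).

Lemma sol_d2_nonpos alpha p mu y y' l r x :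
  0 <= mu -> sol alpha p mu y y' l r -> l < x < r ->
  - (mu * pw (Rabs x) alpha * pw (y x) p) <= 0.
Proof.
  intros Hmu Hs Hx. pose proof (pw_ge0 (Rabs x) alpha). pose proof (pw_ge0 (y x) p).
  assert (0 <= mu * pw (Rabs x) alpha) by nra. nra.
Qed.

Lemma sol_deriv_nonincr alpha p mu y y' l r a b :
  0 <= mu -> sol alpha p mu y y' l r -> l < a -> a <= b -> b < r -> y' b <= y' a.
Proof.
  intros Hmu Hs Ha Hab Hb.
  apply (nonincr_of_deriv y' (fun x => - (mu * pw (Rabs x) alpha * pw (y x) p)) l r); auto.
  - intros x Hx; apply (Hs x Hx).
  - intros x Hx; eapply sol_d2_nonpos; eauto; lra.
Qed.

Lemma sol_incr_left alpha p mu y y' l r t a b :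
  0 <= mu -> sol alpha p mu y y' l r -> l < t < r -> y' t = 0 ->
  l < a -> a <= b -> b <= t -> y a <= y b.
Proof.
  intros Hmu Hs Ht H0 Ha Hab Hb.
  apply (nondecr_of_deriv y y' l r); try lra.
  - intros s Hs'; apply (Hs s Hs').
  - intros s Hs'. rewrite <- H0. eapply sol_deriv_nonincr; eauto; lra.
Qed.

Lemma sol_decr_right alpha p mu y y' l r t a b :
  0 <= mu -> sol alpha p mu y y' l r -> l < t < r -> y' t = 0 ->
  t <= a -> a <= b -> b < r -> y b <= y a.
Proof.
  intros Hmu Hs Ht H0 Ha Hab Hb.
  apply (nonincr_of_deriv y y' l r); try lra.
  - intros s Hs'; apply (Hs s Hs').
  - intros s Hs'. rewrite <- H0. eapply sol_deriv_nonincr; eauto; lra.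
Qed.

Lemma sol_max alpha p mu y y' l r t :
  0 <= mu -> sol alpha p mu y y' l r -> l < t < r -> y' t = 0 ->
  forall x, l < x < r -> y x <= y t.
Proof.
  intros Hmu Hs Ht H0 x Hx.
  destruct (Rle_dec x t) as [Hle|Hle].
  - apply (sol_incr_left alpha p mu y y' l r t x t); auto; lra.
  - apply (sol_decr_right alpha p mu y y' l r t t x); auto; lra.
Qed.

Lemma sol_strict alpha p mu y y' l r t :
  0 < mu -> sol alpha p mu y y' l r -> l < 0 -> 0 < t -> t < r -> y' t = 0 ->
  (forall x, l < x < r -> 0 < y x) -> y 0 < y t.
Proof.
  intros Hmu Hs Hl Ht Hr H0 Hpos.
  assert (Hd : forall s, 0 < s < t -> 0 < y' s).
  { intros s Hs'.
    destruct (mvt_open y' (fun x => - (mu * pw (Rabs x) alpha * pw (y x) p)) l r s t) as [c [Hc Heq]];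
      try lra.
    - intros x Hx; apply (Hs x Hx).
    - assert (0 < pw (Rabs c) alpha) by (apply pw_gt0; rewrite Rabs_pos_eq; lra).
      assert (0 < pw (y c) p) by (apply pw_gt0, Hpos; lra).
      assert (0 < mu * pw (Rabs c) alpha * pw (y c) p) by (apply Rmult_lt_0_compat; nra).
      rewrite H0 in Heq. nra. }
  assert (H1 : y 0 <= y (t/2)) by (apply (sol_incr_left alpha p mu y y' l r t 0 (t/2)); auto; lra).
  assert (H3 : y (3*t/4) <= y t) by (apply (sol_incr_left alpha p mu y y' l r t (3*t/4) t); auto; lra).
  destruct (mvt_open y y' l r (t/2) (3*t/4)) as [c [Hc Heq]]; try lra.
  - intros x Hx; apply (Hs x Hx).
  - assert (0 < y' c) by (apply Hd; lra). nra.
Qed.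

Lemma abs_between lo hi x : lo < x < hi -> Rabs x <= Rabs lo + Rabs hi.
Proof.
  intros H. pose proof (Rabs_pos lo). pose proof (Rabs_pos hi).
  destruct (Rle_dec 0 x).
  - rewrite Rabs_pos_eq by lra. pose proof (Rle_abs hi). lra.
  - rewrite Rabs_left by lra. pose proof (Rle_abs (- lo)). rewrite Rabs_Ropp in *. lra.
Qed.

Lemma sol_uniq alpha p y1 y1' y2 y2' l r t :
  0 < alpha -> 1 <= p -> sol alpha p 1 y1 y1' l r -> sol alpha p 1 y2 y2' l r ->
  l < t < r -> (forall x, l < x < r -> y1 x <= 1) -> (forall x, l < x < r -> y2 x <= 1) ->
  y1 t = y2 t -> y1' t = y2' t -> forall x, l < x < r -> y1 x = y2 x.
Proof.
  intros Ha Hp H1 H2 Ht B1 B2 E0 W0.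
  apply (uniq_core l r t (pw (Rabs l + Rabs r) alpha * p) y1 y1'
           (fun x => - (1 * pw (Rabs x) alpha * pw (y1 x) p)) y2 y2'
           (fun x => - (1 * pw (Rabs x) alpha * pw (y2 x) p))); auto.
  - pose proof (pw_ge0 (Rabs l + Rabs r) alpha). nra.
  - intros x Hx.
    replace (- (1 * pw (Rabs x) alpha * pw (y1 x) p) - - (1 * pw (Rabs x) alpha * pw (y2 x) p))
      with (- (pw (Rabs x) alpha * (pw (y1 x) p - pw (y2 x) p))) by ring.
    rewrite Rabs_Ropp, Rabs_mult, (Rabs_pos_eq (pw _ alpha)) by apply pw_ge0.
    assert (Hh : pw (Rabs x) alpha <= pw (Rabs l + Rabs r) alpha)
      by (apply pw_mono; [lra| apply abs_between; auto]).
    assert (Hl := pw_lip p (y1 x) (y2 x) Hp (B1 x Hx) (B2 x Hx)).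
    pose proof (pw_ge0 (Rabs x) alpha). pose proof (Rabs_pos (pw (y1 x) p - pw (y2 x) p)).
    pose proof (Rabs_pos (y1 x - y2 x)).
    apply Rle_trans with (pw (Rabs x) alpha * (p * Rabs (y1 x - y2 x))).
    + apply Rmult_le_compat_l; auto.
    + assert (0 <= p * Rabs (y1 x - y2 x)) by nra. nra.
Qed.

Lemma compare alpha p y1 y1' b1 a1 y2 y2' b2 a2 t :
  0 < alpha -> 1 <= p ->
  sol alpha p 1 y1 y1' b1 a1 -> sol alpha p 1 y2 y2' b2 a2 ->
  b1 < t < a1 -> b2 < t < a2 ->
  (forall x, b1 < x < a1 -> 0 < y1 x) -> (forall x, b2 < x < a2 -> 0 < y2 x) ->
  y1 t = 1 -> y2 t = 1 -> y1' t = 0 -> y2' t = 0 ->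
  filterlim y1 (at_right b1) (locally 0) -> filterlim y1 (at_left a1) (locally 0) ->
  filterlim y2 (at_right b2) (locally 0) -> filterlim y2 (at_left a2) (locally 0) ->
  a1 = a2 /\ b1 = b2 /\ forall x, b1 < x < a1 -> y1 x = y2 x.
Proof.
  intros Ha Hp S1 S2 T1 T2 P1 P2 V1 V2 D1 D2 L1 R1 L2 R2.
  set (lo := Rmax b1 b2). set (hi := Rmin a1 a2).
  assert (Hlo1 : b1 <= lo) by apply Rmax_l. assert (Hlo2 : b2 <= lo) by apply Rmax_r.
  assert (Hhi1 : hi <= a1) by apply Rmin_l. assert (Hhi2 : hi <= a2) by apply Rmin_r.
  assert (Hlot : lo < t) by (apply Rmax_lub_lt; lra).
  assert (Hhit : t < hi) by (apply Rmin_glb_lt; lra).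
  assert (Heq : forall x, lo < x < hi -> y1 x = y2 x).
  { apply (sol_uniq alpha p y1 y1' y2 y2' lo hi t); auto.
    - intros x Hx; apply (S1 x); lra.
    - intros x Hx; apply (S2 x); lra.
    - intros x Hx. rewrite <- V1. apply (sol_max alpha p 1 y1 y1' b1 a1 t); auto; lra.
    - intros x Hx. rewrite <- V2. apply (sol_max alpha p 1 y2 y2' b2 a2 t); auto; lra.
    - congruence. congruence. }
  assert (Hright : forall (f g f' g' : R -> R) (bf af bg ag : R),
             sol alpha p 1 g g' bg ag -> (forall x, bg < x < ag -> 0 < g x) ->
             bg < t -> af < ag -> t < af ->
             (forall x, t < x < af -> f x = g x) ->
             filterlim f (at_left af) (locally 0) -> False).
  { intros f g f' g' bf af bg ag Sg Pg Hbg Haf Htf E Lf.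
    assert (Hc : continuous g af) by (eapply cont_of_derive; apply (Sg af); lra).
    assert (Lg : filterlim g (at_left af) (locally 0)).
    { rewrite at_left_iff in *. intros eps He. destruct (Lf eps He) as [d [Hd H]].
      exists (Rmin d (af - t)). split. apply Rmin_pos; lra.
      intros x Hx. assert (Rmin d (af - t) <= d) by apply Rmin_l.
      assert (Rmin d (af - t) <= af - t) by apply Rmin_r.
      rewrite <- E by lra. apply H. lra. }
    assert (g af = 0) by (apply lim_left_cont; auto).
    assert (0 < g af) by (apply Pg; lra). lra. }
  assert (Hleft : forall (f g f' g' : R -> R) (bf af bg ag : R),
             sol alpha p 1 g g' bg ag -> (forall x, bg < x < ag -> 0 < g x) ->
             bg < bf -> bf < t -> t < ag ->
             (forall x, bf < x < t -> f x = g x) ->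
             filterlim f (at_right bf) (locally 0) -> False).
  { intros f g f' g' bf af bg ag Sg Pg Hbg Haf Htf E Lf.
    assert (Hc : continuous g bf) by (eapply cont_of_derive; apply (Sg bf); lra).
    assert (Lg : filterlim g (at_right bf) (locally 0)).
    { rewrite at_right_iff in *. intros eps He. destruct (Lf eps He) as [d [Hd H]].
      exists (Rmin d (t - bf)). split. apply Rmin_pos; lra.
      intros x Hx. assert (Rmin d (t - bf) <= d) by apply Rmin_l.
      assert (Rmin d (t - bf) <= t - bf) by apply Rmin_r.
      rewrite <- E by lra. apply H. lra. }
    assert (g bf = 0) by (apply lim_right_cont; auto).
    assert (0 < g bf) by (apply Pg; lra). lra. }
  assert (Ea : a1 = a2).
  { destruct (Rtotal_order a1 a2) as [H|[H|H]]; auto; exfalso.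
    - apply (Hright y1 y2 y1' y2' b1 a1 b2 a2); auto; try lra.
      intros x Hx; apply Heq. split; [lra|]. unfold hi. rewrite Rmin_left; lra.
    - apply (Hright y2 y1 y2' y1' b2 a2 b1 a1); auto; try lra.
      intros x Hx; symmetry; apply Heq. split; [lra|]. unfold hi. rewrite Rmin_right; lra. }
  assert (Eb : b1 = b2).
  { destruct (Rtotal_order b1 b2) as [H|[H|H]]; auto; exfalso.
    - apply (Hleft y2 y1 y2' y1' b2 a2 b1 a1); auto; try lra.
      intros x Hx; symmetry; apply Heq. split; [|lra]. unfold lo. rewrite Rmax_right; lra.
    - apply (Hleft y1 y2 y1' y2' b1 a1 b2 a2); auto; try lra.
      intros x Hx; apply Heq. split; [|lra]. unfold lo. rewrite Rmax_left; lra. }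
  split; auto. split; auto. intros x Hx. apply Heq.
  unfold lo, hi. rewrite <- Ea, <- Eb, Rmax_left, Rmin_left; lra.
Qed.
Lemma Rpower_2 c : 0 < c -> Rpower c 2 = c * c.
Proof. intros H. replace 2 with (1 + 1) by ring. rewrite Rpower_plus, Rpower_1; auto. Qed.

Lemma is_derive_lin (c x : R) : is_derive (fun t => c * t) x c.
Proof. eapply is_derive_val. apply is_derive_scalR, is_derive_idR. ring. Qed.

Lemma sol_scale alpha p mu y y' l r k c l' r' :
  0 < k -> 0 < c -> sol alpha p mu y y' l r -> (forall x, l' < x < r' -> l < c * x < r) ->
  sol alpha p (mu * Rpower c (alpha + 2) / Rpower k (p - 1))
    (fun x => k * y (c * x)) (fun x => k * c * y' (c * x)) l' r'.
Proof.
  intros Hk Hc Hs Hi x Hx. destruct (Hs (c * x) (Hi x Hx)) as [D1 D2]. split.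
  - eapply is_derive_val.
    + apply is_derive_scalR. apply (is_derive_compR y (fun t => c * t)).
      apply is_derive_lin. exact D1.
    + ring.
  - eapply is_derive_val.
    + apply is_derive_scalR. apply (is_derive_compR y' (fun t => c * t)).
      apply is_derive_lin. exact D2.
    + rewrite pw_abs_scale, pw_scale by auto.
      assert (E1 : Rpower c (alpha + 2) = Rpower c alpha * (c * c))
        by (rewrite Rpower_plus, Rpower_2; auto).
      assert (E2 : Rpower k p = Rpower k (p - 1) * k)
        by (replace p with ((p - 1) + 1) at 1 by ring; rewrite Rpower_plus, Rpower_1; auto).
      rewrite E1, E2. pose proof (Rpower_pos k (p - 1)). field. lra.
Qed.
Definition hh alpha (s : R) := pw (Rabs s) alpha.
Definition gg p (y : R) := pw (Rmin y 1) p.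
Definition kk alpha p (phi : R -> R) (s : R) := hh alpha s * gg p (phi s).
Definition TT alpha p (phi : R -> R) (x : R) :=
  1 - RInt (fun t => RInt (kk alpha p phi) 0 t) 0 x.

Lemma Rmin1_lip y1 y2 : Rabs (Rmin y1 1 - Rmin y2 1) <= Rabs (y1 - y2).
Proof.
  unfold Rmin. destruct (Rle_dec y1 1); destruct (Rle_dec y2 1);
  unfold Rabs; repeat destruct Rcase_abs; lra.
Qed.

Lemma gg_lip p y1 y2 : 1 <= p -> Rabs (gg p y1 - gg p y2) <= p * Rabs (y1 - y2).
Proof.
  intros Hp. unfold gg. eapply Rle_trans. apply pw_lip; auto; apply Rmin_r.
  apply Rmult_le_compat_l. lra. apply Rmin1_lip.
Qed.

Lemma gg_ge0 p y : 0 <= gg p y.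
Proof. apply pw_ge0. Qed.

Lemma gg_le1 p y : 0 <= p -> gg p y <= 1.
Proof. intros; apply pw_le1; auto; apply Rmin_r. Qed.

Lemma gg_eq p y : y <= 1 -> gg p y = pw y p.
Proof. intros H; unfold gg; rewrite Rmin_left; auto. Qed.

Lemma Rmin1_cont x : continuous (fun y => Rmin y 1) x.
Proof.
  apply cont_iff. intros eps He. exists eps. split; auto. intros y Hy.
  eapply Rle_lt_trans. apply Rmin1_lip. auto.
Qed.

Lemma gg_cont p x : 0 < p -> continuous (gg p) x.
Proof.
  intros Hp. unfold gg. apply continuous_comp with (f := fun y => Rmin y 1) (g := fun t => pw t p).
  apply Rmin1_cont. apply pw_continuous; auto.
Qed.

Lemma contR_mult (f g : R -> R) x : continuous f x -> continuous g x -> continuous (fun y => f y * g y) x.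
Proof. intros H1 H2. apply (continuous_mult (K := R_AbsRing) f g x H1 H2). Qed.

Lemma contR_comp (f g : R -> R) x : continuous f x -> continuous g (f x) -> continuous (fun y => g (f y)) x.
Proof. intros H1 H2. apply (continuous_comp f g x H1 H2). Qed.

Lemma kk_cont alpha p phi x : 0 < alpha -> 0 < p -> (forall y, continuous phi y) ->
  continuous (kk alpha p phi) x.
Proof.
  intros Ha Hp Hc. unfold kk. apply contR_mult.
  apply h_continuous; auto. apply contR_comp; auto. apply gg_cont; auto.
Qed.

Lemma ex_RInt_cont (f : R -> R) a b : (forall y, continuous f y) -> ex_RInt f a b.
Proof. intros H. apply (@ex_RInt_continuous R_CompleteNormedModule). intros; apply H. Qed.

Lemma is_derive_prim (f : R -> R) x : (forall y, continuous f y) ->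
  is_derive (fun t => RInt f 0 t) x (f x).
Proof.
  intros H. apply (@is_derive_RInt R_CompleteNormedModule f (fun t => RInt f 0 t) 0 x); auto.
  apply filter_forall. intros b. apply RInt_correct. apply ex_RInt_cont; auto.
Qed.

Lemma prim_cont (f : R -> R) x : (forall y, continuous f y) -> continuous (fun t => RInt f 0 t) x.
Proof. intros H. eapply cont_of_derive. apply is_derive_prim; auto. Qed.

Lemma TT_derive1 alpha p phi x : 0 < alpha -> 0 < p -> (forall y, continuous phi y) ->
  is_derive (TT alpha p phi) x (- RInt (kk alpha p phi) 0 x).
Proof.
  intros Ha Hp Hc. unfold TT. eapply is_derive_val.
  apply (is_derive_minusR (fun _ => 1) (fun x => RInt (fun t => RInt (kk alpha p phi) 0 t) 0 x)).
  apply is_derive_constR. apply is_derive_prim. intros y. apply prim_cont.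
  intros z; apply kk_cont; auto. ring.
Qed.

Lemma is_derive_oppR (f : R -> R) x a : is_derive f x a -> is_derive (fun t => - f t) x (- a).
Proof.
  intros H. apply is_derive_Reals in H. apply is_derive_Reals.
  apply (derivable_pt_lim_opp f x a H).
Qed.

Lemma TT_derive2 alpha p phi x : 0 < alpha -> 0 < p -> (forall y, continuous phi y) ->
  is_derive (fun x => - RInt (kk alpha p phi) 0 x) x (- kk alpha p phi x).
Proof.
  intros Ha Hp Hc. apply (is_derive_oppR (fun x => RInt (kk alpha p phi) 0 x)).
  apply is_derive_prim. intros z; apply kk_cont; auto.
Qed.

Lemma TT_cont alpha p phi x : 0 < alpha -> 0 < p -> (forall y, continuous phi y) ->
  continuous (TT alpha p phi) x.
Proof. intros Ha Hp Hc. eapply cont_of_derive. apply TT_derive1; auto. Qed.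

Fixpoint phin alpha p (n : nat) : R -> R :=
  match n with
  | O => fun _ => 1
  | S m => TT alpha p (phin alpha p m)
  end.

Lemma phin_cont alpha p n x : 0 < alpha -> 0 < p -> continuous (phin alpha p n) x.
Proof.
  intros Ha Hp. revert x. induction n; intros x; simpl.
  - apply continuous_const.
  - apply TT_cont; auto.
Qed.

Lemma RInt_swapR (f : R -> R) a b : ex_RInt f a b -> RInt f b a = - RInt f a b.
Proof. intros H. rewrite <- (opp_RInt_swap f a b H). reflexivity. Qed.

Lemma est_const (f : R -> R) x M : (forall y, continuous f y) ->
  (forall s, Rabs s <= Rabs x -> Rabs (f s) <= M) -> Rabs (RInt f 0 x) <= Rabs x * M.
Proof.
  intros Hc Hb. destruct (Rle_dec 0 x).
  - rewrite (Rabs_pos_eq x) by lra. replace x with (x - 0) at 2 by ring.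
    apply abs_RInt_le_const; auto. apply ex_RInt_cont; auto.
    intros t Ht. apply Hb. rewrite !Rabs_pos_eq; lra.
  - rewrite (RInt_swapR f x 0) by (apply ex_RInt_cont; auto).
    rewrite Rabs_Ropp. rewrite (Rabs_left x) by lra. replace (- x) with (0 - x) by ring.
    apply abs_RInt_le_const; auto. lra. apply ex_RInt_cont; auto.
    intros t Ht. apply Hb. rewrite (Rabs_left x) by lra. unfold Rabs; destruct Rcase_abs; lra.
Qed.
Lemma exp_cont c x : continuous (fun s => exp (c * s)) x.
Proof. eapply cont_of_derive. apply is_derive_expc. Qed.

Lemma expB_cont B c x : continuous (fun s => B * exp (c * s)) x.
Proof. eapply cont_of_derive. apply is_derive_scalR. apply is_derive_expc. Qed.

Lemma RInt_expB B c a b : c <> 0 ->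
  RInt (fun s => B * exp (c * s)) a b = B * exp (c * b) / c - B * exp (c * a) / c.
Proof.
  intros Hc. apply is_RInt_unique.
  replace (B * exp (c * b) / c - B * exp (c * a) / c) with
    (Hierarchy.minus (B / c * exp (c * b)) (B / c * exp (c * a))).
  apply (is_RInt_derive (fun s => B / c * exp (c * s)) (fun s => B * exp (c * s))).
  - intros t _. eapply is_derive_val. apply is_derive_scalR. apply is_derive_expc. field; auto.
  - intros t _. apply expB_cont.
  - unfold Hierarchy.minus, Hierarchy.plus, Hierarchy.opp; simpl. field; auto.
Qed.

Lemma est_exp (f : R -> R) x B c : 0 < c -> 0 <= B -> (forall y, continuous f y) ->
  (forall s, Rabs s <= Rabs x -> Rabs (f s) <= B * exp (c * Rabs s)) ->
  Rabs (RInt f 0 x) <= B * exp (c * Rabs x) / c.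
Proof.
  intros Hc HB Hf Hb.
  assert (Haf : forall a b, ex_RInt (fun t => Rabs (f t)) a b).
  { intros a b. apply ex_RInt_cont. intros y. apply continuous_Rabs_comp. apply Hf. }
  assert (HE : forall a b c', ex_RInt (fun s => B * exp (c' * s)) a b).
  { intros a b c'. apply ex_RInt_cont. intros y. apply expB_cont. }
  assert (0 < exp (c * Rabs x)) by apply exp_pos.
  assert (HBc : 0 <= B / c) by (apply Rdiv_le_0_compat; lra).
  destruct (Rle_dec 0 x).
  - eapply Rle_trans. apply abs_RInt_le; auto. apply ex_RInt_cont; auto.
    eapply Rle_trans. apply (RInt_le _ (fun s => B * exp (c * s))); auto.
    + intros t Ht. replace t with (Rabs t) at 2 by (apply Rabs_pos_eq; lra).
      apply Hb. rewrite !Rabs_pos_eq; lra.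
    + rewrite RInt_expB by lra. rewrite Rabs_pos_eq by lra.
      rewrite Rmult_0_r, exp_0. assert (0 <= B * 1 / c) by (apply Rdiv_le_0_compat; lra). lra.
  - rewrite (RInt_swapR f x 0) by (apply ex_RInt_cont; auto). rewrite Rabs_Ropp.
    eapply Rle_trans. apply abs_RInt_le; auto. lra. apply ex_RInt_cont; auto.
    eapply Rle_trans. apply (RInt_le _ (fun s => B * exp ((- c) * s))); auto. lra.
    + intros t Ht. replace ((- c) * t) with (c * Rabs t) by (rewrite Rabs_left by lra; ring).
      apply Hb. rewrite !Rabs_left; lra.
    + rewrite RInt_expB by lra. rewrite (Rabs_left x) by lra.
      rewrite Rmult_0_r, exp_0. replace (- c * x) with (c * - x) by ring.
      assert (0 <= B * 1 / c) by (apply Rdiv_le_0_compat; lra).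
      replace (B * exp (c * - x) / - c) with (- (B * exp (c * - x) / c)) by (field; lra).
      replace (B * 1 / - c) with (- (B * 1 / c)) by (field; lra). lra.
Qed.
Lemma RInt_minusR (f g : R -> R) a b : ex_RInt f a b -> ex_RInt g a b ->
  RInt (fun x => f x - g x) a b = RInt f a b - RInt g a b.
Proof. intros H1 H2. exact (RInt_minus f g a b H1 H2). Qed.

Lemma contR_minus (f g : R -> R) x : continuous f x -> continuous g x -> continuous (fun y => f y - g y) x.
Proof. intros H1 H2. apply (continuous_minus (K := R_AbsRing) f g x H1 H2). Qed.

Lemma TT_diff alpha p phi psi x : 0 < alpha -> 0 < p ->
  (forall y, continuous phi y) -> (forall y, continuous psi y) ->
  TT alpha p phi x - TT alpha p psi x =
  - RInt (fun t => RInt (fun s => kk alpha p phi s - kk alpha p psi s) 0 t) 0 x.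
Proof.
  intros Ha Hp H1 H2. unfold TT.
  assert (K1 : forall y, continuous (kk alpha p phi) y) by (intros; apply kk_cont; auto).
  assert (K2 : forall y, continuous (kk alpha p psi) y) by (intros; apply kk_cont; auto).
  rewrite (RInt_ext (fun t => RInt (fun s => kk alpha p phi s - kk alpha p psi s) 0 t)
             (fun t => RInt (kk alpha p phi) 0 t - RInt (kk alpha p psi) 0 t)).
  2: { intros t _. apply RInt_minusR; apply ex_RInt_cont; auto. }
  rewrite RInt_minusR.
  change (RInt (RInt (kk alpha p phi) 0) 0 x) with (RInt (fun t => RInt (kk alpha p phi) 0 t) 0 x).
  change (RInt (RInt (kk alpha p psi) 0) 0 x) with (RInt (fun t => RInt (kk alpha p psi) 0 t) 0 x).
  ring.
  all: apply ex_RInt_cont; intros; apply prim_cont; auto.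
Qed.

Lemma kk_bound alpha p phi s L : 0 < alpha -> 0 < p -> Rabs s <= L ->
  0 <= kk alpha p phi s <= pw L alpha.
Proof.
  intros Ha Hp Hs. unfold kk, hh.
  pose proof (pw_ge0 (Rabs s) alpha). pose proof (gg_ge0 p (phi s)).
  pose proof (gg_le1 p (phi s) ltac:(lra)).
  assert (pw (Rabs s) alpha <= pw L alpha) by (apply pw_mono; lra).
  split. nra. nra.
Qed.

Lemma kk_lip alpha p phi psi s L : 0 < alpha -> 1 <= p -> Rabs s <= L ->
  Rabs (kk alpha p phi s - kk alpha p psi s) <= pw L alpha * p * Rabs (phi s - psi s).
Proof.
  intros Ha Hp Hs. unfold kk, hh.
  rewrite <- Rmult_minus_distr_l, Rabs_mult, (Rabs_pos_eq (pw _ alpha)) by apply pw_ge0.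
  assert (pw (Rabs s) alpha <= pw L alpha) by (apply pw_mono; lra).
  pose proof (gg_lip p (phi s) (psi s) Hp). pose proof (pw_ge0 (Rabs s) alpha).
  pose proof (Rabs_pos (gg p (phi s) - gg p (psi s))). pose proof (Rabs_pos (phi s - psi s)).
  apply Rle_trans with (pw (Rabs s) alpha * (p * Rabs (phi s - psi s))).
  apply Rmult_le_compat_l; auto. rewrite <- Rmult_assoc. apply Rmult_le_compat_r; auto.
  apply Rmult_le_compat_r; lra.
Qed.

Definition Kc alpha p L := pw L alpha * p.
Definition cc alpha p L := 2 * Kc alpha p L + 2.
Definition Bc alpha L := L * L * pw L alpha.

Lemma Kc_ge0 alpha p L : 0 <= p -> 0 <= Kc alpha p L.
Proof. intros; unfold Kc. pose proof (pw_ge0 L alpha). nra. Qed.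

Lemma exp_ge1 y : 0 <= y -> 1 <= exp y.
Proof. intros H. rewrite <- exp_0. destruct H. left; apply exp_increasing; auto. subst; lra. Qed.

Lemma picard_geom alpha p L : 0 < alpha -> 1 <= p -> 0 < L ->
  forall n x, Rabs x <= L ->
  Rabs (phin alpha p (S n) x - phin alpha p n x) <=
    Bc alpha L * exp (cc alpha p L * Rabs x) * (/2) ^ n.
Proof.
  intros Ha Hp HL.
  assert (HK := Kc_ge0 alpha p L ltac:(lra)).
  assert (Hc : 0 < cc alpha p L) by (unfold cc; lra).
  assert (HB : 0 <= Bc alpha L) by (unfold Bc; pose proof (pw_ge0 L alpha); pose proof (Rabs_pos L); nra).
  assert (Hcont : forall n y, continuous (phin alpha p n) y) by (intros; apply phin_cont; lra).
  induction n as [|n IH]; intros x Hx.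
  - simpl. replace (TT alpha p (fun _ : R => 1) x - 1) with
      (- RInt (fun t => RInt (kk alpha p (fun _ => 1)) 0 t) 0 x) by (unfold TT; ring).
    rewrite Rabs_Ropp. simpl pow. rewrite Rmult_1_r.
    eapply Rle_trans. apply (est_const _ x (Rabs x * pw L alpha)).
    + intros y; apply prim_cont. intros; apply kk_cont; auto; try lra. intros; apply continuous_const.
    + intros t Ht. eapply Rle_trans. apply (est_const _ t (pw L alpha)).
      * intros; apply kk_cont; auto; try lra. intros; apply continuous_const.
      * intros s Hs. rewrite Rabs_pos_eq by (apply (kk_bound alpha p _ s L); lra).
        apply (kk_bound alpha p _ s L); lra.
      * apply Rmult_le_compat_r; auto. apply pw_ge0.
    + assert (1 <= exp (cc alpha p L * Rabs x)) by (apply exp_ge1; pose proof (Rabs_pos x); nra).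
      unfold Bc. pose proof (pw_ge0 L alpha). pose proof (Rabs_pos x).
      assert (Rabs x * (Rabs x * pw L alpha) <= L * L * pw L alpha).
      { rewrite <- Rmult_assoc. apply Rmult_le_compat_r; auto. apply Rmult_le_compat; lra. }
      assert (0 <= L * L * pw L alpha) by nra. nra.
  - change (phin alpha p (S (S n)) x) with (TT alpha p (phin alpha p (S n)) x).
    change (phin alpha p (S n) x) with (TT alpha p (phin alpha p n) x).
    rewrite TT_diff by (auto; lra). rewrite Rabs_Ropp.
    set (K := Kc alpha p L). set (c := cc alpha p L). set (B := Bc alpha L).
    set (B1 := K * B * (/2) ^ n).
    assert (Hc' : 0 < c) by exact Hc. assert (HK' : 0 <= K) by exact HK. assert (HB' : 0 <= B) by exact HB.
    assert (HB1 : 0 <= B1) by (unfold B1; pose proof (pow_le (/2) n ltac:(lra)); apply Rmult_le_pos; auto; apply Rmult_le_pos; auto).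
    assert (Hf : forall y, continuous (fun s => kk alpha p (phin alpha p (S n)) s - kk alpha p (phin alpha p n) s) y).
    { intros y. apply contR_minus; apply kk_cont; auto; lra. }
    eapply Rle_trans. apply (est_exp _ x (B1 / c) c); auto.
    + unfold Rdiv; apply Rmult_le_pos; [auto| left; apply Rinv_0_lt_compat; auto].
    + intros y; apply prim_cont; auto.
    + intros t Ht. replace (B1 / c * exp (c * Rabs t)) with (B1 * exp (c * Rabs t) / c) by (field; lra).
      apply est_exp; auto.
      intros s Hs. eapply Rle_trans. apply (kk_lip alpha p _ _ s L); auto; lra.
      fold K. unfold B1.
      assert (Hs' : Rabs s <= L) by lra. specialize (IH s Hs'). fold c B in IH.
      replace (K * B * (/ 2) ^ n * exp (c * Rabs s)) with (K * (B * exp (c * Rabs s) * (/ 2) ^ n)) by ring.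
      apply Rmult_le_compat_l; auto.
    + unfold B1. simpl pow.
      assert (HcK : K / (c * c) <= / 2).
      { unfold c, cc. fold K. apply Rmult_le_reg_r with (2 * ((2 * K + 2) * (2 * K + 2))). nra.
        field_simplify; nra. }
      pose proof (exp_pos (c * Rabs x)). pose proof (pow_le (/2) n ltac:(lra)).
      assert (E : K * B * (/ 2) ^ n / c * exp (c * Rabs x) / c =
                  (K / (c * c)) * (B * exp (c * Rabs x) * (/2) ^ n)) by (field; lra).
      rewrite E. replace (B * exp (c * Rabs x) * (/ 2 * (/ 2) ^ n)) with (/2 * (B * exp (c * Rabs x) * (/2) ^ n)) by ring.
      apply Rmult_le_compat_r; auto. apply Rmult_le_pos; auto. apply Rmult_le_pos; lra.
Qed.
Definition Ac alpha p L := Bc alpha L * exp (cc alpha p L * L).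

Lemma Ac_ge0 alpha p L : 0 < L -> 0 <= Ac alpha p L.
Proof.
  intros HL. unfold Ac, Bc. pose proof (pw_ge0 L alpha). pose proof (exp_pos (cc alpha p L * L)).
  apply Rmult_le_pos; [|lra]. apply Rmult_le_pos; auto. nra.
Qed.

Lemma picard_cauchy alpha p L : 0 < alpha -> 1 <= p -> 0 < L ->
  forall n j x, Rabs x <= L ->
  Rabs (phin alpha p (n + j) x - phin alpha p n x) <=
    2 * Ac alpha p L * (/2) ^ n - 2 * Ac alpha p L * (/2) ^ (n + j).
Proof.
  intros Ha Hp HL n j x Hx. induction j as [|j IH].
  - rewrite Nat.add_0_r. unfold Rminus. rewrite Rplus_opp_r, Rplus_opp_r, Rabs_R0. lra.
  - rewrite Nat.add_succ_r.
    assert (G := picard_geom alpha p L Ha Hp HL (n + j) x Hx).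
    assert (Hc : 0 < cc alpha p L) by (unfold cc; pose proof (Kc_ge0 alpha p L); lra).
    assert (exp (cc alpha p L * Rabs x) <= exp (cc alpha p L * L)).
    { destruct (Req_dec (Rabs x) L) as [->|Hne]. lra. left. apply exp_increasing.
      apply Rmult_lt_compat_l; lra. }
    assert (HB : 0 <= Bc alpha L) by (unfold Bc; pose proof (pw_ge0 L alpha); nra).
    pose proof (pow_le (/2) (n + j) ltac:(lra)).
    assert (G' : Rabs (phin alpha p (S (n + j)) x - phin alpha p (n + j) x) <= Ac alpha p L * (/2) ^ (n + j)).
    { eapply Rle_trans. apply G. unfold Ac. apply Rmult_le_compat_r; auto.
      apply Rmult_le_compat_l; auto. }
    replace (phin alpha p (S (n + j)) x - phin alpha p n x) with
      ((phin alpha p (S (n + j)) x - phin alpha p (n + j) x) + (phin alpha p (n + j) x - phin alpha p n x)) by ring.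
    eapply Rle_trans. apply Rabs_triang.
    simpl pow. lra.
Qed.

Lemma picard_cauchy2 alpha p L : 0 < alpha -> 1 <= p -> 0 < L ->
  forall n m x, (n <= m)%nat -> Rabs x <= L ->
  Rabs (phin alpha p m x - phin alpha p n x) <= 2 * Ac alpha p L * (/2) ^ n.
Proof.
  intros Ha Hp HL n m x Hnm Hx. replace m with (n + (m - n))%nat by lia.
  eapply Rle_trans. apply (picard_cauchy alpha p L); auto.
  pose proof (Ac_ge0 alpha p L HL). pose proof (pow_le (/2) (n + (m - n)) ltac:(lra)).
  assert (0 <= 2 * Ac alpha p L * (/2) ^ (n + (m - n))) by (apply Rmult_le_pos; lra). lra.
Qed.

Lemma pow_half_small A eps : 0 < eps -> exists N, forall n, (N <= n)%nat -> A * (/2) ^ n < eps.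
Proof.
  intros He. assert (Hy : 0 < eps / (Rabs A + 1)) by (apply Rdiv_lt_0_compat; pose proof (Rabs_pos A); lra).
  destruct (pow_lt_1_zero (/2) ltac:(rewrite Rabs_pos_eq; lra) _ Hy) as [N HN].
  exists N. intros n Hn. specialize (HN n Hn).
  rewrite Rabs_pos_eq in HN by (apply pow_le; lra).
  pose proof (pow_le (/2) n ltac:(lra)). pose proof (Rabs_pos A).
  apply Rle_lt_trans with (Rabs A * (/2) ^ n).
  - apply Rmult_le_compat_r; auto. apply Rle_abs.
  - apply Rle_lt_trans with (Rabs A * (eps / (Rabs A + 1))). apply Rmult_le_compat_l; lra.
    apply Rmult_lt_reg_r with (Rabs A + 1). lra. field_simplify; nra.
Qed.

Lemma small_zero a C : (forall n, Rabs a <= C * (/2) ^ n) -> a = 0.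
Proof.
  intros H. destruct (Req_dec a 0) as [|Hne]; auto. exfalso.
  assert (Hp : 0 < Rabs a) by (apply Rabs_pos_lt; auto).
  destruct (pow_half_small C (Rabs a) Hp) as [N HN].
  specialize (HN N (le_n N)). specialize (H N). lra.
Qed.

Definition Zf alpha p (x : R) : R := real (Lim_seq (fun n => phin alpha p n x)).

Lemma Z_lim alpha p x : 0 < alpha -> 1 <= p -> is_lim_seq (fun n => phin alpha p n x) (Zf alpha p x).
Proof.
  intros Ha Hp. set (L := Rabs x + 1).
  assert (HL : 0 < L) by (unfold L; pose proof (Rabs_pos x); lra).
  assert (Hx : Rabs x <= L) by (unfold L; lra).
  assert (Hex : ex_finite_lim_seq (fun n => phin alpha p n x)).
  { apply ex_lim_seq_cauchy_corr. intros eps.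
    destruct (pow_half_small (2 * Ac alpha p L) eps (cond_pos eps)) as [N HN].
    exists N. intros n m Hn Hm.
    destruct (Nat.le_ge_cases n m) as [Hnm|Hnm].
    - rewrite Rabs_minus_sym. eapply Rle_lt_trans. apply picard_cauchy2; eauto. apply HN; auto.
    - eapply Rle_lt_trans. apply (picard_cauchy2 alpha p L Ha Hp HL m n); auto. apply HN; auto. }
  unfold Zf. destruct Hex as [l Hl]. rewrite (is_lim_seq_unique _ _ Hl). simpl. auto.
Qed.

Lemma Z_err alpha p L x n : 0 < alpha -> 1 <= p -> 0 < L -> Rabs x <= L ->
  Rabs (Zf alpha p x - phin alpha p n x) <= 2 * Ac alpha p L * (/2) ^ n.
Proof.
  intros Ha Hp HL Hx.
  assert (H1 : is_lim_seq (fun m => Rabs (phin alpha p m x - phin alpha p n x))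
                 (Rabs (Zf alpha p x - phin alpha p n x))).
  { apply (is_lim_seq_abs _ (Zf alpha p x - phin alpha p n x)).
    apply is_lim_seq_minus'. apply Z_lim; auto. apply is_lim_seq_const. }
  assert (H2 := is_lim_seq_const (2 * Ac alpha p L * (/2) ^ n)).
  assert (Hle := is_lim_seq_le_loc _ _ _ _ (ex_intro _ n (fun m Hm => picard_cauchy2 alpha p L Ha Hp HL n m x Hm Hx)) H1 H2).
  simpl in Hle. auto.
Qed.
Lemma Z_cont alpha p x0 : 0 < alpha -> 1 <= p -> continuous (Zf alpha p) x0.
Proof.
  intros Ha Hp. apply cont_iff. intros eps He.
  set (L := Rabs x0 + 1). assert (HL : 0 < L) by (unfold L; pose proof (Rabs_pos x0); lra).
  destruct (pow_half_small (2 * Ac alpha p L) (eps / 3) ltac:(lra)) as [N HN].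
  specialize (HN N (le_n N)).
  assert (Hc := phin_cont alpha p N x0 Ha ltac:(lra)). rewrite cont_iff in Hc.
  destruct (Hc (eps / 3) ltac:(lra)) as [d [Hd Hd']].
  exists (Rmin d 1). split. apply Rmin_pos; lra.
  intros y Hy. assert (Rmin d 1 <= d) by apply Rmin_l. assert (Rmin d 1 <= 1) by apply Rmin_r.
  assert (HyL : Rabs y <= L).
  { unfold L. pose proof (Rabs_triang_inv y x0). lra. }
  assert (Hx0L : Rabs x0 <= L) by (unfold L; lra).
  assert (E1 := Z_err alpha p L y N Ha Hp HL HyL).
  assert (E2 := Z_err alpha p L x0 N Ha Hp HL Hx0L).
  assert (E3 : Rabs (phin alpha p N y - phin alpha p N x0) < eps / 3) by (apply Hd'; lra).
  replace (Zf alpha p y - Zf alpha p x0) with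
    ((Zf alpha p y - phin alpha p N y) + (phin alpha p N y - phin alpha p N x0)
     + (phin alpha p N x0 - Zf alpha p x0)) by ring.
  rewrite Rabs_minus_sym in E2.
  eapply Rle_lt_trans. apply Rabs_triang.
  eapply Rle_lt_trans. apply Rplus_le_compat_r. apply Rabs_triang. lra.
Qed.
Lemma Z_fix alpha p x : 0 < alpha -> 1 <= p -> Zf alpha p x = TT alpha p (Zf alpha p) x.
Proof.
  intros Ha Hp.
  set (L := Rabs x + 1). assert (HL : 0 < L) by (unfold L; pose proof (Rabs_pos x); lra).
  assert (HxL : Rabs x <= L) by (unfold L; lra).
  set (A := Ac alpha p L). set (K := pw L alpha * p).
  assert (HA : 0 <= A) by (apply Ac_ge0; auto).
  assert (HK : 0 <= K) by (unfold K; pose proof (pw_ge0 L alpha); nra).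
  assert (HZc : forall y, continuous (Zf alpha p) y) by (intros; apply Z_cont; auto).
  apply Rminus_diag_uniq. apply (small_zero _ (2 * A + L * L * (K * (2 * A)))). intros n.
  pose proof (pow_le (/2) n ltac:(lra)) as Hpw.
  assert (E1 : Rabs (Zf alpha p x - phin alpha p (S n) x) <= 2 * A * (/2) ^ n).
  { eapply Rle_trans. apply (Z_err alpha p L x (S n)); auto. fold A. simpl pow.
    assert (0 <= 2 * A * (/2) ^ n) by (apply Rmult_le_pos; lra). nra. }
  assert (E2 : Rabs (TT alpha p (phin alpha p n) x - TT alpha p (Zf alpha p) x) <=
               L * L * (K * (2 * A)) * (/2) ^ n).
  { rewrite TT_diff; auto; try lra. 2: intros; apply phin_cont; lra.
    rewrite Rabs_Ropp.
    assert (Hf : forall y, continuous (fun s => kk alpha p (phin alpha p n) s - kk alpha p (Zf alpha p) s) y).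
    { intros y. apply contR_minus; apply kk_cont; auto; try lra. intros; apply phin_cont; lra. }
    set (M := K * (2 * A) * (/2) ^ n).
    assert (HM : 0 <= M) by (unfold M; apply Rmult_le_pos; [nra|lra]).
    eapply Rle_trans. apply (est_const _ x (Rabs x * M)).
    + intros y; apply prim_cont; auto.
    + intros t Ht. eapply Rle_trans. apply (est_const _ t M); auto.
      * intros s Hs. eapply Rle_trans. apply (kk_lip alpha p _ _ s L); auto; lra.
        fold K. unfold M. replace (K * (2 * A) * (/ 2) ^ n) with (K * (2 * A * (/2) ^ n)) by ring.
        apply Rmult_le_compat_l; auto.
        rewrite Rabs_minus_sym. apply Z_err; auto. lra.
      * apply Rmult_le_compat_r; auto.
    + pose proof (Rabs_pos x).
      assert (Rabs x * (Rabs x * M) <= L * L * M).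
      { rewrite <- Rmult_assoc. apply Rmult_le_compat_r; auto. apply Rmult_le_compat; lra. }
      unfold M in *. lra. }
  replace (Zf alpha p x - TT alpha p (Zf alpha p) x) with
    ((Zf alpha p x - phin alpha p (S n) x) + (TT alpha p (phin alpha p n) x - TT alpha p (Zf alpha p) x))
    by (simpl; ring).
  eapply Rle_trans. apply Rabs_triang. lra.
Qed.

Definition Zd alpha p (x : R) : R := - RInt (kk alpha p (Zf alpha p)) 0 x.

Lemma Z_d1 alpha p x : 0 < alpha -> 1 <= p -> is_derive (Zf alpha p) x (Zd alpha p x).
Proof.
  intros Ha Hp. apply (is_derive_ext (TT alpha p (Zf alpha p))).
  intros t; symmetry; apply Z_fix; auto.
  apply TT_derive1; auto; try lra. intros; apply Z_cont; auto.
Qed.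

Lemma Z_d2 alpha p x : 0 < alpha -> 1 <= p ->
  is_derive (Zd alpha p) x (- (pw (Rabs x) alpha * gg p (Zf alpha p x))).
Proof.
  intros Ha Hp. apply TT_derive2; auto; try lra. intros; apply Z_cont; auto.
Qed.

Lemma RInt_pointR (f : R -> R) a : RInt f a a = 0.
Proof. exact (RInt_point a f). Qed.

Lemma Z_0 alpha p : 0 < alpha -> 1 <= p -> Zf alpha p 0 = 1.
Proof.
  intros Ha Hp. rewrite Z_fix by auto. unfold TT. rewrite RInt_pointR. ring.
Qed.

Lemma Zd_0 alpha p : Zd alpha p 0 = 0.
Proof. unfold Zd. rewrite RInt_pointR. ring. Qed.
Lemma Zd_d2_nonpos alpha p x : - (pw (Rabs x) alpha * gg p (Zf alpha p x)) <= 0.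
Proof. pose proof (pw_ge0 (Rabs x) alpha). pose proof (gg_ge0 p (Zf alpha p x)). nra. Qed.

Lemma Zd_nonincr alpha p a b : 0 < alpha -> 1 <= p -> a <= b -> Zd alpha p b <= Zd alpha p a.
Proof.
  intros Ha Hp Hab.
  apply (nonincr_of_deriv (Zd alpha p) (fun x => - (pw (Rabs x) alpha * gg p (Zf alpha p x))) (a - 1) (b + 1));
    try lra.
  - intros x _. apply Z_d2; auto.
  - intros x _. apply Zd_d2_nonpos.
Qed.

Lemma Z_le1 alpha p x : 0 < alpha -> 1 <= p -> Zf alpha p x <= 1.
Proof.
  intros Ha Hp. rewrite <- (Z_0 alpha p) by auto.
  destruct (Rle_dec x 0).
  - apply (nondecr_of_deriv (Zf alpha p) (Zd alpha p) (x - 1) 1); try lra.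
    + intros t _; apply Z_d1; auto.
    + intros t Ht. rewrite <- (Zd_0 alpha p). apply Zd_nonincr; auto; lra.
  - apply (nonincr_of_deriv (Zf alpha p) (Zd alpha p) (-1) (x + 1)); try lra.
    + intros t _; apply Z_d1; auto.
    + intros t Ht. rewrite <- (Zd_0 alpha p). apply Zd_nonincr; auto; lra.
Qed.

Lemma Z_even alpha p x : 0 < alpha -> 1 <= p -> Zf alpha p (- x) = Zf alpha p x.
Proof.
  intros Ha Hp. set (L := Rabs x + 1).
  assert (HL : 0 < L) by (unfold L; pose proof (Rabs_pos x); lra).
  symmetry.
  apply (uniq_core (- L) L 0 (pw L alpha * p) (Zf alpha p) (Zd alpha p)
           (fun x => - (pw (Rabs x) alpha * gg p (Zf alpha p x)))
           (fun x => Zf alpha p (- x)) (fun x => - Zd alpha p (- x))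
           (fun x => - (pw (Rabs x) alpha * gg p (Zf alpha p (- x))))); try lra.
  - pose proof (pw_ge0 L alpha). nra.
  - intros t _. split. apply Z_d1; auto. apply Z_d2; auto.
  - intros t _. split.
    + eapply is_derive_val. apply (is_derive_compR (Zf alpha p) (fun s => - s)).
      apply is_derive_oppR, is_derive_idR. apply Z_d1; auto. ring.
    + eapply is_derive_val. apply is_derive_oppR.
      apply (is_derive_compR (Zd alpha p) (fun s => - s)).
      apply is_derive_oppR, is_derive_idR. apply Z_d2; auto. rewrite Rabs_Ropp. ring.
  - intros t Ht.
    replace (- (pw (Rabs t) alpha * gg p (Zf alpha p t)) - - (pw (Rabs t) alpha * gg p (Zf alpha p (- t))))
      with (- (pw (Rabs t) alpha * (gg p (Zf alpha p t) - gg p (Zf alpha p (- t))))) by ring.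
    rewrite Rabs_Ropp, Rabs_mult, (Rabs_pos_eq (pw _ alpha)) by apply pw_ge0.
    assert (pw (Rabs t) alpha <= pw L alpha).
    { apply pw_mono. lra. unfold Rabs; destruct Rcase_abs; lra. }
    pose proof (gg_lip p (Zf alpha p t) (Zf alpha p (- t)) Hp). pose proof (pw_ge0 (Rabs t) alpha).
    pose proof (Rabs_pos (Zf alpha p t - Zf alpha p (- t))).
    apply Rle_trans with (pw (Rabs t) alpha * (p * Rabs (Zf alpha p t - Zf alpha p (- t)))).
    apply Rmult_le_compat_l; auto. rewrite <- Rmult_assoc. apply Rmult_le_compat_r; auto.
    apply Rmult_le_compat_r; lra.
  - rewrite Ropp_0. reflexivity.
  - rewrite Ropp_0, Zd_0. ring.
  - unfold L; split; unfold Rabs; destruct Rcase_abs; lra.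
Qed.
Lemma Zd_neg alpha p x : 0 < alpha -> 1 <= p -> 0 < x -> Zd alpha p x < 0.
Proof.
  intros Ha Hp Hx.
  assert (Hc := Z_cont alpha p 0 Ha Hp). rewrite cont_iff in Hc.
  destruct (Hc (1/2) ltac:(lra)) as [d [Hd Hd']]. rewrite Z_0 in Hd' by auto.
  set (m := Rmin x (d / 2)).
  assert (Hm1 : m <= x) by apply Rmin_l. assert (Hm2 : m <= d / 2) by apply Rmin_r.
  assert (Hm0 : 0 < m) by (apply Rmin_pos; lra).
  destruct (mvt_open (Zd alpha p) (fun x => - (pw (Rabs x) alpha * gg p (Zf alpha p x))) (-1) (x + 1) (m/2) m)
    as [c [Hc1 Heq]]; try lra.
  - intros t _; apply Z_d2; auto.
  - assert (HZc : 1/2 < Zf alpha p c).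
    { assert (Rabs (c - 0) < d) by (rewrite Rminus_0_r, Rabs_pos_eq; lra).
      specialize (Hd' c H). apply Rabs_def2 in Hd'. lra. }
    assert (0 < pw (Rabs c) alpha) by (apply pw_gt0; rewrite Rabs_pos_eq; lra).
    assert (0 < gg p (Zf alpha p c)).
    { unfold gg. apply pw_gt0. apply Rmin_glb_lt; lra. }
    assert (0 < pw (Rabs c) alpha * gg p (Zf alpha p c)) by (apply Rmult_lt_0_compat; auto).
    assert (Zd alpha p (m/2) <= Zd alpha p 0) by (apply Zd_nonincr; auto; lra).
    assert (Zd alpha p x <= Zd alpha p m) by (apply Zd_nonincr; auto; lra).
    rewrite Zd_0 in *. nra.
Qed.

Lemma Z_root alpha p : 0 < alpha -> 1 < p ->
  exists a, 0 < a /\ Zf alpha p a = 0 /\ forall x, 0 <= x < a -> 0 < Zf alpha p x.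
Proof.
  intros Ha Hp.
  assert (Hp1 : 1 <= p) by lra.
  set (d := - Zd alpha p 1). assert (Hd : 0 < d) by (unfold d; pose proof (Zd_neg alpha p 1 Ha Hp1); lra).
  set (X := 1 + 2 / d).
  assert (HX1 : 1 < X) by (unfold X; assert (0 < 2 / d) by (apply Rdiv_lt_0_compat; lra); lra).
  assert (HZX : Zf alpha p X < 0).
  { destruct (mvt_open (Zf alpha p) (Zd alpha p) 0 (X + 1) 1 X) as [c [Hc Heq]]; try lra.
    - intros t _; apply Z_d1; auto.
    - assert (Zd alpha p c <= Zd alpha p 1) by (apply Zd_nonincr; auto; lra).
      pose proof (Z_le1 alpha p 1 Ha Hp1).
      assert (Zd alpha p c * (X - 1) <= - d * (X - 1)) by (unfold d; apply Rmult_le_compat_r; lra).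
      assert (- d * (X - 1) = -2) by (unfold X; field; lra). lra. }
  destruct (IVT_gen (Zf alpha p) 0 X 0) as [a [Ha1 Ha2]].
  - intros x. apply continuity_pt_filterlim. apply Z_cont; auto.
  - rewrite Z_0 by auto. rewrite Rmin_right, Rmax_left; lra.
  - rewrite Rmin_left, Rmax_right in Ha1 by lra.
    assert (Ha0 : a <> 0) by (intros ->; rewrite Z_0 in Ha2; lra).
    exists a. split. lra. split; auto.
    intros x Hx. destruct (Req_dec x 0) as [->|Hx0].
    + rewrite Z_0; lra.
    + destruct (mvt_open (Zf alpha p) (Zd alpha p) (-1) (a + 1) x a) as [c [Hc Heq]]; try lra.
      * intros t _; apply Z_d1; auto.
      * assert (Zd alpha p c < 0) by (apply Zd_neg; auto; lra).
        rewrite Ha2 in Heq. nra.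
Qed.

Lemma Z_sol alpha p a : 0 < alpha -> 1 <= p -> sol alpha p 1 (Zf alpha p) (Zd alpha p) (- a) a.
Proof.
  intros Ha Hp x _. split. apply Z_d1; auto.
  eapply is_derive_val. apply Z_d2; auto. rewrite gg_eq by (apply Z_le1; auto). ring.
Qed.
Definition psol alpha p lambda (u u' : R -> R) : Prop :=
  sol alpha p lambda u u' (-1) 1 /\ (forall x, -1 < x < 1 -> 0 < u x) /\
  u (-1) = 0 /\ u 1 = 0 /\
  filterlim u (at_right (-1)) (locally 0) /\ filterlim u (at_left 1) (locally 0).

Lemma pos_sol_psol alpha p lambda u : pos_sol alpha p lambda u <-> exists u', psol alpha p lambda u u'.
Proof. unfold pos_sol, psol, sol. tauto. Qed.

Definition nsol alpha p (z z' : R -> R) (a t : R) : Prop :=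
  sol alpha p 1 z z' (- a) a /\ - a < t < a /\ (forall x, - a < x < a -> 0 < z x) /\
  z t = 1 /\ z' t = 0 /\ z (- a) = 0 /\ z a = 0 /\
  filterlim z (at_right (- a)) (locally 0) /\ filterlim z (at_left a) (locally 0).

Lemma sol_mu alpha p mu1 mu2 y y' l r : mu1 = mu2 -> sol alpha p mu1 y y' l r -> sol alpha p mu2 y y' l r.
Proof. intros ->; auto. Qed.

Lemma lim_left_scale (z : R -> R) a b k : 0 < a ->
  filterlim z (at_left (a * b)) (locally 0) ->
  filterlim (fun x => k * z (a * x)) (at_left b) (locally 0).
Proof.
  intros Ha H. rewrite at_left_iff in *. intros eps He.
  assert (He' : 0 < eps / (Rabs k + 1)) by (apply Rdiv_lt_0_compat; pose proof (Rabs_pos k); lra).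
  destruct (H _ He') as [d [Hd Hd']]. exists (d / a). split. apply Rdiv_lt_0_compat; lra.
  intros x Hx. rewrite Rminus_0_r.
  assert (Hz : Rabs (z (a * x) - 0) < eps / (Rabs k + 1)).
  { apply Hd'. split.
    - assert (E : a * (b - d / a) = a * b - d) by (field; lra).
      assert (a * (b - d / a) < a * x) by (apply Rmult_lt_compat_l; lra). lra.
    - apply Rmult_lt_compat_l; lra. }
  rewrite Rminus_0_r in Hz. rewrite Rabs_mult. pose proof (Rabs_pos k). pose proof (Rabs_pos (z (a * x))).
  assert (E : (Rabs k + 1) * (eps / (Rabs k + 1)) = eps) by (field; lra).
  apply Rle_lt_trans with ((Rabs k + 1) * Rabs (z (a * x))). nra.
  rewrite <- E. apply Rmult_lt_compat_l; lra.
Qed.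
Lemma lim_right_scale (z : R -> R) a b k : 0 < a ->
  filterlim z (at_right (a * b)) (locally 0) ->
  filterlim (fun x => k * z (a * x)) (at_right b) (locally 0).
Proof.
  intros Ha H. rewrite at_right_iff in *. intros eps He.
  assert (He' : 0 < eps / (Rabs k + 1)) by (apply Rdiv_lt_0_compat; pose proof (Rabs_pos k); lra).
  destruct (H _ He') as [d [Hd Hd']]. exists (d / a). split. apply Rdiv_lt_0_compat; lra.
  intros x Hx. rewrite Rminus_0_r.
  assert (Hz : Rabs (z (a * x) - 0) < eps / (Rabs k + 1)).
  { apply Hd'. split.
    - apply Rmult_lt_compat_l; lra.
    - assert (E : a * (b + d / a) = a * b + d) by (field; lra).
      assert (a * x < a * (b + d / a)) by (apply Rmult_lt_compat_l; lra). lra. }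
  rewrite Rminus_0_r in Hz. rewrite Rabs_mult. pose proof (Rabs_pos k). pose proof (Rabs_pos (z (a * x))).
  assert (E : (Rabs k + 1) * (eps / (Rabs k + 1)) = eps) by (field; lra).
  apply Rle_lt_trans with ((Rabs k + 1) * Rabs (z (a * x))). nra.
  rewrite <- E. apply Rmult_lt_compat_l; lra.
Qed.

Lemma lim_refl_lr (v : R -> R) a : filterlim v (at_left a) (locally 0) ->
  filterlim (fun x => v (- x)) (at_right (- a)) (locally 0).
Proof.
  intros H. rewrite at_left_iff in H. rewrite at_right_iff. intros eps He.
  destruct (H eps He) as [d [Hd H']]. exists d. split; auto. intros x Hx. apply H'. lra.
Qed.

Lemma lim_refl_rl (v : R -> R) a : filterlim v (at_right a) (locally 0) ->
  filterlim (fun x => v (- x)) (at_left (- a)) (locally 0).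
Proof.
  intros H. rewrite at_right_iff in H. rewrite at_left_iff. intros eps He.
  destruct (H eps He) as [d [Hd H']]. exists d. split; auto. intros x Hx. apply H'. lra.
Qed.

Definition kf alpha p lambda a := Rpower (Rpower a (alpha + 2) / lambda) (/ (p - 1)).

Lemma kf_pos alpha p lambda a : 0 < kf alpha p lambda a.
Proof. apply Rpower_pos. Qed.

Lemma Rpower_inv_pow X q : 0 < X -> q <> 0 -> Rpower (Rpower X (/ q)) q = X.
Proof. intros HX Hq. rewrite Rpower_mult. replace (/ q * q) with 1 by (field; auto). apply Rpower_1; auto. Qed.

Lemma kf_pow alpha p lambda a : 1 < p -> 0 < lambda ->
  Rpower (kf alpha p lambda a) (p - 1) = Rpower a (alpha + 2) / lambda.
Proof.
  intros Hp Hl. unfold kf. apply Rpower_inv_pow. apply Rdiv_lt_0_compat; auto. apply Rpower_pos. lra.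
Qed.

Lemma forward alpha p lambda z z' a t : 0 < alpha -> 1 < p -> 0 < lambda -> 0 < a ->
  nsol alpha p z z' a t ->
  psol alpha p lambda (fun x => kf alpha p lambda a * z (a * x))
    (fun x => kf alpha p lambda a * a * z' (a * x)).
Proof.
  intros Ha Hp Hl Ha0 [S [T [P [V1 [V2 [B1 [B2 [L1 L2]]]]]]]].
  assert (Hk := kf_pos alpha p lambda a).
  split; [|split; [|split; [|split; [|split]]]].
  - eapply sol_mu; [| apply (sol_scale alpha p 1 z z' (-a) a (kf alpha p lambda a) a (-1) 1); auto].
    + rewrite kf_pow by auto. field. split. lra. pose proof (Rpower_pos a (alpha + 2)). lra.
    + intros x Hx. split; nra.
  - intros x Hx. apply Rmult_lt_0_compat; auto. apply P. split; nra.
  - replace (a * -1) with (- a) by ring. rewrite B1. ring.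
  - rewrite Rmult_1_r, B2. ring.
  - apply lim_right_scale; auto. replace (a * -1) with (- a) by ring. auto.
  - apply lim_left_scale; auto. rewrite Rmult_1_r. auto.
Qed.
Lemma Rpower_inv_base x y : 0 < x -> Rpower (/ x) y = / Rpower x y.
Proof. intros H. unfold Rpower. rewrite ln_Rinv by auto. rewrite <- exp_Ropp. f_equal. ring. Qed.

Lemma Rpower_pow_inv X q : 0 < X -> q <> 0 -> Rpower (Rpower X q) (/ q) = X.
Proof. intros HX Hq. rewrite Rpower_mult. replace (q * / q) with 1 by (field; auto). apply Rpower_1; auto. Qed.

Lemma normalize alpha p lambda v v' eta : 0 < alpha -> 1 < p -> 0 < lambda ->
  psol alpha p lambda v v' -> -1 < eta < 1 -> v' eta = 0 ->
  exists c w w', 0 < c /\ nsol alpha p w w' c (c * eta) /\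
    forall x, -1 <= x <= 1 -> v x = kf alpha p lambda c * w (c * x).
Proof.
  intros Ha Hp Hl [S [P [B1 [B2 [L1 L2]]]]] He Hd.
  set (m := v eta). assert (Hm : 0 < m) by (apply P; auto).
  set (M := Rpower m (p - 1)). assert (HM : 0 < M) by apply Rpower_pos.
  set (c := Rpower (lambda * M) (/ (alpha + 2))). assert (Hc : 0 < c) by apply Rpower_pos.
  assert (Hcp : Rpower c (alpha + 2) = lambda * M) by (apply Rpower_inv_pow; [nra|lra]).
  assert (Hkf : kf alpha p lambda c = m).
  { unfold kf. rewrite Hcp. replace (lambda * M / lambda) with M by (field; lra).
    unfold M. apply Rpower_pow_inv; auto. lra. }
  exists c, (fun y => / m * v (/ c * y)), (fun y => / m * / c * v' (/ c * y)).
  split; auto. split.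
  - split; [|split; [|split; [|split; [|split; [|split; [|split; [|split]]]]]]].
    + eapply sol_mu; [| apply (sol_scale alpha p lambda v v' (-1) 1 (/ m) (/ c) (- c) c)].
      * rewrite !Rpower_inv_base by auto. fold M. rewrite Hcp. field. lra.
      * apply Rinv_0_lt_compat; auto.
      * apply Rinv_0_lt_compat; auto.
      * auto.
      * intros x Hx. assert (0 < / c) by (apply Rinv_0_lt_compat; auto).
        replace (-1) with (/ c * - c) by (field; lra). replace 1 with (/ c * c) by (field; lra).
        split; apply Rmult_lt_compat_l; lra.
    + split; nra.
    + intros x Hx. apply Rmult_lt_0_compat. apply Rinv_0_lt_compat; auto. apply P.
      assert (0 < / c) by (apply Rinv_0_lt_compat; auto).
      replace (-1) with (/ c * - c) by (field; lra). replace 1 with (/ c * c) by (field; lra).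
      split; apply Rmult_lt_compat_l; lra.
    + replace (/ c * (c * eta)) with eta by (field; lra). fold m. field; lra.
    + replace (/ c * (c * eta)) with eta by (field; lra). rewrite Hd. ring.
    + replace (/ c * - c) with (-1) by (field; lra). rewrite B1. ring.
    + replace (/ c * c) with 1 by (field; lra). rewrite B2. ring.
    + apply lim_right_scale. apply Rinv_0_lt_compat; auto.
      replace (/ c * - c) with (-1) by (field; lra). auto.
    + apply lim_left_scale. apply Rinv_0_lt_compat; auto.
      replace (/ c * c) with 1 by (field; lra). auto.
  - intros x Hx. rewrite Hkf. replace (/ c * (c * x)) with x by (field; lra). field; lra.
Qed.

Lemma reflect alpha p lambda v v' : psol alpha p lambda v v' ->
  psol alpha p lambda (fun x => v (- x)) (fun x => - v' (- x)).
Proof.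
  intros [S [P [B1 [B2 [L1 L2]]]]].
  split; [|split; [|split; [|split; [|split]]]].
  - intros x Hx. destruct (S (- x) ltac:(lra)) as [D1 D2]. split.
    + eapply is_derive_val. apply (is_derive_compR v (fun s => - s)).
      apply is_derive_oppR, is_derive_idR. exact D1. ring.
    + eapply is_derive_val. apply is_derive_oppR.
      apply (is_derive_compR v' (fun s => - s)).
      apply is_derive_oppR, is_derive_idR. exact D2. rewrite Rabs_Ropp. ring.
  - intros x Hx. apply P. lra.
  - cbv beta. replace (- -1) with 1 by ring. auto.
  - cbv beta. replace (- 1) with (-1) by ring. auto.
  - apply lim_refl_lr. auto.
  - replace 1 with (- -1) by ring. apply lim_refl_rl. auto.
Qed.

Lemma clamp_lip s1 s2 x y : s1 <= s2 ->
  Rabs (Rmax s1 (Rmin s2 y) - Rmax s1 (Rmin s2 x)) <= Rabs (y - x).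
Proof.
  intros H. unfold Rmax, Rmin.
  repeat destruct Rle_dec; unfold Rabs; repeat destruct Rcase_abs; lra.
Qed.

Lemma exists_crit alpha p lambda v v' : 0 <= lambda -> psol alpha p lambda v v' ->
  exists eta, -1 < eta < 1 /\ v' eta = 0.
Proof.
  intros Hl Hv. destruct Hv as [S [P [B1 [B2 [L1 L2]]]]].
  assert (Hv0 : 0 < v 0) by (apply P; lra).
  assert (H1 : exists s, -1 < s < 1 /\ v' s <= 0).
  { destruct (classic (exists s, -1 < s < 1 /\ v' s <= 0)) as [H|H]; auto. exfalso.
    assert (Hinc : forall x, 0 <= x < 1 -> v 0 <= v x).
    { intros x Hx. apply (nondecr_of_deriv v v' (-1) 1); try lra.
      - intros t Ht; apply (S t Ht).
      - intros t Ht. destruct (Rle_dec 0 (v' t)) as [|Hn]; auto. exfalso. apply H. exists t. split; lra. }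
    rewrite at_left_iff in L2. destruct (L2 (v 0) Hv0) as [d [Hd Hd']].
    set (x := 1 - Rmin d 1 / 2). assert (Rmin d 1 <= d) by apply Rmin_l. assert (Rmin d 1 <= 1) by apply Rmin_r.
    assert (0 < Rmin d 1) by (apply Rmin_pos; lra).
    specialize (Hd' x ltac:(unfold x; lra)). specialize (Hinc x ltac:(unfold x; lra)).
    rewrite Rminus_0_r in Hd'. pose proof (Rle_abs (v x)). lra. }
  assert (H2 : exists s, -1 < s < 1 /\ 0 <= v' s).
  { destruct (classic (exists s, -1 < s < 1 /\ 0 <= v' s)) as [H|H]; auto. exfalso.
    assert (Hdec : forall x, -1 < x <= 0 -> v 0 <= v x).
    { intros x Hx. apply (nonincr_of_deriv v v' (-1) 1); try lra.
      - intros t Ht; apply (S t Ht).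
      - intros t Ht. destruct (Rle_dec (v' t) 0) as [|Hn]; auto. exfalso. apply H. exists t. split; lra. }
    rewrite at_right_iff in L1. destruct (L1 (v 0) Hv0) as [d [Hd Hd']].
    set (x := -1 + Rmin d 1 / 2). assert (Rmin d 1 <= d) by apply Rmin_l. assert (Rmin d 1 <= 1) by apply Rmin_r.
    assert (0 < Rmin d 1) by (apply Rmin_pos; lra).
    specialize (Hd' x ltac:(unfold x; lra)). specialize (Hdec x ltac:(unfold x; lra)).
    rewrite Rminus_0_r in Hd'. pose proof (Rle_abs (v x)). lra. }
  destruct H1 as [s [Hs Hs']]. destruct H2 as [s' [Hs2 Hs2']].
  destruct (Req_dec (v' s) 0) as [E|E]. exists s; auto.
  destruct (Req_dec (v' s') 0) as [E'|E']. exists s'; auto.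
  assert (Hss : s' < s).
  { destruct (Rlt_dec s' s) as [|Hn]; auto. exfalso.
    assert (v' s' <= v' s) by (apply (sol_deriv_nonincr alpha p lambda v v' (-1) 1); auto; lra). lra. }
  set (f := fun x => v' (Rmax s' (Rmin s x))).
  assert (Hclamp : forall x, s' <= Rmax s' (Rmin s x) <= s).
  { intros x. unfold Rmax, Rmin. repeat destruct Rle_dec; lra. }
  assert (Hf : continuity f).
  { intros x. apply continuity_pt_filterlim. unfold f.
    apply (contR_comp (fun x => Rmax s' (Rmin s x)) v').
    - apply cont_iff. intros eps He. exists eps. split; auto. intros y Hy.
      eapply Rle_lt_trans. apply clamp_lip. lra. auto.
    - eapply cont_of_derive. apply (S _). specialize (Hclamp x). lra. }
  assert (Fs' : f s' = v' s') by (unfold f; f_equal; unfold Rmax, Rmin; repeat destruct Rle_dec; lra).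
  assert (Fs : f s = v' s) by (unfold f; f_equal; unfold Rmax, Rmin; repeat destruct Rle_dec; lra).
  destruct (IVT_gen f s' s 0 Hf) as [x [Hx Hfx]].
  - rewrite Fs, Fs'. rewrite Rmin_right, Rmax_left; lra.
  - rewrite Rmin_left, Rmax_right in Hx by lra. exists x. split. lra.
    unfold f in Hfx. replace (Rmax s' (Rmin s x)) with x in Hfx; auto.
    unfold Rmax, Rmin; repeat destruct Rle_dec; lra.
Qed.
Lemma nsol_match alpha p z z' a w w' c t : 0 < alpha -> 1 < p ->
  nsol alpha p z z' a t -> nsol alpha p w w' c t -> a = c /\ forall x, - a < x < a -> w x = z x.
Proof.
  intros Ha Hp [S1 [T1 [P1 [V1 [D1 [B1 [B1' [L1 R1]]]]]]]] [S2 [T2 [P2 [V2 [D2 [B2 [B2' [L2 R2]]]]]]]].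
  destruct (compare alpha p w w' (- c) c z z' (- a) a t) as [E1 [E2 E3]]; auto; try lra.
  split. lra. intros x Hx. apply E3. lra.
Qed.

Lemma classify_ref alpha p lambda v c w w' z z' a t : 0 < alpha -> 1 < p -> 0 < lambda ->
  nsol alpha p z z' a t -> nsol alpha p w w' c t ->
  (forall x, -1 <= x <= 1 -> v x = kf alpha p lambda c * w (c * x)) ->
  forall x, -1 <= x <= 1 -> v x = kf alpha p lambda a * z (a * x).
Proof.
  intros Ha Hp Hl Nz Nw Hv x Hx.
  destruct (nsol_match alpha p z z' a w w' c t Ha Hp Nz Nw) as [<- E].
  rewrite Hv by auto. f_equal.
  destruct Nz as [_ [T1 [_ [_ [_ [B1 [B1' _]]]]]]]. destruct Nw as [_ [_ [_ [_ [_ [B2 [B2' _]]]]]]].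
  assert (Ha0 : 0 < a) by lra.
  destruct (Req_dec x 1) as [->|Hx1].
  - rewrite Rmult_1_r. congruence.
  - destruct (Req_dec x (-1)) as [->|Hx2].
    + replace (a * -1) with (- a) by ring. congruence.
    + apply E. split; nra.
Qed.

Lemma ivp_of_sol alpha p z z' b a : sol alpha p 1 z z' b a ->
  forall x, b < x < a -> is_derive z x (z' x) /\ is_derive z' x (- (pw (Rabs x) alpha * pw (z x) p)).
Proof.
  intros S x Hx. destruct (S x Hx) as [D1 D2]. split; auto.
  eapply is_derive_val. exact D2. ring.
Qed.

Lemma sol_of_ivp alpha p z z' b a :
  (forall x, b < x < a -> is_derive z x (z' x) /\ is_derive z' x (- (pw (Rabs x) alpha * pw (z x) p))) ->
  sol alpha p 1 z z' b a.
Proof.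
  intros S x Hx. destruct (S x Hx) as [D1 D2]. split; auto.
  eapply is_derive_val. exact D2. ring.
Qed.
Theorem theorem6p1 (alpha p : R) (Halpha : 0 < alpha) (Hp : 1 < p)
  (xi0 b0 a0 : R) (Hxi0 : 0 < xi0) (Hroots0 : ivp_roots alpha p xi0 b0 a0)
  (Hsym0 : a0 = - b0)
  (Huniq : forall xi b a, 0 < xi -> ivp_roots alpha p xi b a -> a = - b -> xi = xi0)
  (lambda : R) (Hlambda : 0 < lambda) :
  exists u1 u2 u3 : R -> R,
    pos_sol alpha p lambda u1 /\ pos_sol alpha p lambda u2 /\
    pos_sol alpha p lambda u3 /\
    (* the three solutions are distinct *)
    (exists x, -1 < x < 1 /\ u1 x <> u2 x) /\
    (exists x, -1 < x < 1 /\ u1 x <> u3 x) /\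
    (exists x, -1 < x < 1 /\ u2 x <> u3 x) /\
    (* and they are the only positive solutions *)
    (forall v, pos_sol alpha p lambda v ->
       (forall x, -1 <= x <= 1 -> v x = u1 x) \/
       (forall x, -1 <= x <= 1 -> v x = u2 x) \/
       (forall x, -1 <= x <= 1 -> v x = u3 x)) /\
    (* u1 is even *)
    (forall x, -1 <= x <= 1 -> u1 (- x) = u1 x) /\
    (* u2 attains its maximum at xi0 / a(xi0) *)
    (forall x, -1 <= x <= 1 -> u2 x <= u2 (xi0 / a0)) /\
    (* u3 is the reflection of u2 *)
    (forall x, -1 <= x <= 1 -> u3 x = u2 (- x)) /\
    (* relation between lambda and m = max u2 *)
    lambda = pw a0 (alpha + 2) / pw (u2 (xi0 / a0)) (p - 1).
Proof.
  assert (Hp1 : 1 <= p) by lra.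
  destruct Hroots0 as [Hb [z0 [z0' [Hd0 [Hpos0 [Hz1 [Hz'0 [Hzb [Hza [Hlb Hla]]]]]]]]]].
  assert (Eb : b0 = - a0) by lra. rewrite Eb in *.
  assert (Ha0 : 0 < a0) by lra.
  assert (N0 : nsol alpha p z0 z0' a0 xi0).
  { split. apply sol_of_ivp; auto. repeat split; auto; lra. }
  destruct (Z_root alpha p Halpha Hp) as [a1 [Ha1 [Za1 Zpos]]].
  assert (N1 : nsol alpha p (Zf alpha p) (Zd alpha p) a1 0).
  { split; [|split; [|split; [|split; [|split; [|split; [|split; [|split]]]]]]].
    - apply Z_sol; auto.
    - lra.
    - intros x Hx. destruct (Rle_dec 0 x). apply Zpos; lra.
      rewrite <- (Z_even alpha p x) by auto. apply Zpos; lra.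
    - apply Z_0; auto.
    - apply Zd_0.
    - rewrite Z_even; auto.
    - auto.
    - apply lim_right_of_cont. apply Z_cont; auto. rewrite Z_even; auto.
    - apply lim_left_of_cont. apply Z_cont; auto. auto. }
  set (k0 := kf alpha p lambda a0). set (k1 := kf alpha p lambda a1).
  assert (Hk0 : 0 < k0) by apply kf_pos. assert (Hk1 : 0 < k1) by apply kf_pos.
  set (u1 := fun x => k1 * Zf alpha p (a1 * x)).
  set (u2 := fun x => k0 * z0 (a0 * x)).
  set (u3 := fun x => u2 (- x)).
  assert (PS1 : psol alpha p lambda u1 (fun x => k1 * a1 * Zd alpha p (a1 * x)))
    by (apply (forward alpha p lambda _ _ a1 0); auto).
  assert (PS2 : psol alpha p lambda u2 (fun x => k0 * a0 * z0' (a0 * x)))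
    by (apply (forward alpha p lambda _ _ a0 xi0); auto).
  assert (PS3 := reflect _ _ _ _ _ PS2).
  set (t := xi0 / a0).
  assert (Ht : 0 < t < 1).
  { unfold t. split. apply Rdiv_lt_0_compat; lra.
    apply Rmult_lt_reg_r with a0; auto. field_simplify; lra. }
  assert (Hat : a0 * t = xi0) by (unfold t; field; lra).
  assert (S0 : sol alpha p 1 z0 z0' (- a0) a0) by (apply sol_of_ivp; auto).
  assert (Zlt : z0 0 < 1).
  { rewrite <- Hz1. apply (sol_strict alpha p 1 z0 z0' (- a0) a0 xi0); auto; lra. }
  assert (Zm : z0 (- xi0) <= z0 0).
  { apply (sol_incr_left alpha p 1 z0 z0' (- a0) a0 xi0); auto; lra. }
  assert (U2t : u2 t = k0) by (unfold u2; rewrite Hat, Hz1; ring).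
  assert (U20 : u2 0 < k0) by (unfold u2; rewrite Rmult_0_r; nra).
  assert (U10 : u1 0 = k1) by (unfold u1; rewrite Rmult_0_r, Z_0; auto; ring).
  assert (U1le : forall x, u1 x <= k1) by (intros x; unfold u1; pose proof (Z_le1 alpha p (a1 * x) Halpha Hp1); nra).
  assert (U2le : forall x, -1 <= x <= 1 -> u2 x <= k0).
  { intros x Hx. unfold u2. assert (z0 (a0 * x) <= 1).
    { destruct (Req_dec x 1) as [->|H1]. rewrite Rmult_1_r, Hza; lra.
      destruct (Req_dec x (-1)) as [->|H2]. replace (a0 * -1) with (- a0) by ring. rewrite Hzb; lra.
      rewrite <- Hz1. apply (sol_max alpha p 1 z0 z0' (- a0) a0 xi0); auto; try lra. split; nra. }
    nra. }
  assert (Hcls : forall v v' eta, psol alpha p lambda v v' -> 0 < eta < 1 -> v' eta = 0 ->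
            forall x, -1 <= x <= 1 -> v x = u2 x).
  { intros v v' eta Hv He Hd.
    destruct (normalize alpha p lambda v v' eta Halpha Hp Hlambda Hv ltac:(lra) Hd) as [c [w [w' [Hc [Nw Hrel]]]]].
    assert (Hroots : ivp_roots alpha p (c * eta) (- c) c).
    { destruct Nw as [S [T [P [V1 [V2 [B1 [B2 [L1 L2]]]]]]]].
      split; auto. exists w, w'. split. apply ivp_of_sol; auto. repeat split; auto. }
    assert (Exi : c * eta = xi0) by (apply (Huniq _ (- c) c); auto; [nra|ring]).
    rewrite Exi in Nw.
    intros x Hx. unfold u2, k0. apply (classify_ref alpha p lambda v c w w' z0 z0' a0 xi0); auto. }
  exists u1, u2, u3.
  split; [apply pos_sol_psol; eexists; exact PS1|].
  split; [apply pos_sol_psol; eexists; exact PS2|].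
  split; [apply pos_sol_psol; eexists; exact PS3|].
  split.
  { destruct (Req_dec (u1 0) (u2 0)) as [E|E].
    - exists t. split. lra. intros E'. specialize (U1le t). lra.
    - exists 0. split. lra. auto. }
  split.
  { destruct (Req_dec (u1 0) (u3 0)) as [E|E].
    - exists (- t). split. lra. intros E'. specialize (U1le (- t)). unfold u3 in *.
      rewrite Ropp_involutive in E'. rewrite Ropp_0 in E. lra.
    - exists 0. split. lra. auto. }
  split.
  { exists t. split. lra. unfold u3. intros E. rewrite U2t in E.
    unfold u2 in E. replace (a0 * - t) with (- xi0) in E by (rewrite <- Hat; ring). nra. }
  split.
  { intros v Hv. apply pos_sol_psol in Hv. destruct Hv as [v' Hv].
    destruct (exists_crit alpha p lambda v v' ltac:(lra) Hv) as [eta [He Hd]].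
    destruct (Rtotal_order eta 0) as [Hn|[H0|Hpos]].
    - right; right. intros x Hx.
      assert (Hr := reflect _ _ _ _ _ Hv).
      assert (Hx' := Hcls _ _ (- eta) Hr ltac:(lra) ltac:(cbv beta; rewrite Ropp_involutive, Hd; ring) (- x) ltac:(lra)).
      cbv beta in Hx'. rewrite Ropp_involutive in Hx'. rewrite Hx'. reflexivity.
    - left. subst eta.
      destruct (normalize alpha p lambda v v' 0 Halpha Hp Hlambda Hv ltac:(lra) Hd) as [c [w [w' [Hc [Nw Hrel]]]]].
      rewrite Rmult_0_r in Nw. intros x Hx. unfold u1, k1.
      apply (classify_ref alpha p lambda v c w w' (Zf alpha p) (Zd alpha p) a1 0); auto.
    - right; left. apply (Hcls v v' eta); auto. lra. }
  split.
  { intros x Hx. unfold u1. replace (a1 * - x) with (- (a1 * x)) by ring. rewrite Z_even; auto. }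
  split.
  { intros x Hx. fold t. rewrite U2t. apply U2le; auto. }
  split.
  { intros x Hx. reflexivity. }
  fold t. rewrite U2t. rewrite pw_pos by auto. rewrite pw_pos by auto.
  unfold k0. rewrite kf_pow by auto. pose proof (Rpower_pos a0 (alpha + 2)). field. split; lra.
Qed.
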